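(* Let $\Omega$ be a bounded strictly convex planar domain with $\mathcal{C}^1$ boundary, axially symmetric with respect to a line, and let $O$ be one of the two points of $\partial\Omega$ on the symmetry axis. Let $q\ge2$ and let $\mathcal{P}^{(q)}$ be the set of convex $q$-gons $(p_0,\dots,p_{q-1})$ with vertices on $\partial\Omega$ in positive cyclic order, symmetric with respect to the axis, and with $p_0=O$. If $\underline{p}^{(\Omega,q)}\in\mathcal{P}^{(q)}$ maximizes the area among all polygons in $\mathcal{P}^{(q)}$, then its vertices form a $q$-periodic orbit of the symplectic billiard in $\Omega$.
   Context: Symplectic billiard in $\Omega$: a chord $(q_1,q_2)$ of $\partial\Omega$ is sent to $(q_2,q_3)$ where $q_3\in\partial\Omega$ is such that the line $q_1q_3$ is parallel to the tangent line to $\partial\Omega$ at $q_2$. A $q$-periodic orbit is a cyclic sequence $p_0,\dots,p_{q-1}$ of boundary points such that every triple $(p_{j-1},p_j,p_{j+1})$ (indices mod $q$) consists of consecutive bounces. *)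

(* Defs.v *)
From Stdlib Require Import Reals.
From Coquelicot Require Import Coquelicot.
Open Scope R_scope.

Definition pt := (R * R)%type.

Definition padd (x y : pt) : pt := (fst x + fst y, snd x + snd y).
Definition psub (x y : pt) : pt := (fst x - fst y, snd x - snd y).
Definition pscal (a : R) (x : pt) : pt := (a * fst x, a * snd x).
Definition dot (x y : pt) : R := fst x * fst y + snd x * snd y.
Definition cross (x y : pt) : R := fst x * snd y - snd x * fst y.
Definition rotJ (v : pt) : pt := (- snd v, fst v).
Definition dist2 (x y : pt) : R := dot (psub x y) (psub x y).

Definition is_open (Om : pt -> Prop) : Prop :=
  forall x, Om x -> exists e, 0 < e /\ forall y, dist2 x y < e * e -> Om y.
Definition in_closure (Om : pt -> Prop) (x : pt) : Prop :=
  forall e, 0 < e -> exists y, Om y /\ dist2 x y < e * e.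
Definition in_boundary (Om : pt -> Prop) (x : pt) : Prop :=
  in_closure Om x /\ ~ Om x.
Definition bounded (Om : pt -> Prop) : Prop :=
  exists M, forall x, Om x -> dot x x <= M.

(** A bounded strictly convex planar domain: nonempty, open, bounded, and the
    open segment between any two distinct points of the closure lies in Om
    (this implies convexity, hence connectedness). *)
Definition strictly_convex_domain (Om : pt -> Prop) : Prop :=
  (exists x, Om x) /\ is_open Om /\ bounded Om /\
  forall x y l, in_closure Om x -> in_closure Om y -> x <> y -> 0 < l < 1 ->
    Om (padd (pscal (1 - l) x) (pscal l y)).

(** ** C^1 boundary: a regular C^1, 1-periodic parametrization [g] of the
    boundary, injective on one period, with derivative [dg], traversed in the
    positive (counterclockwise) sense, i.e. Om lies to the left of [dg]. *)
Definition ccw_C1_boundary_param (Om : pt -> Prop) (g dg : R -> pt) : Prop :=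
  (forall t, g (t + 1) = g t) /\
  (forall s t, 0 <= s < 1 -> 0 <= t < 1 -> g s = g t -> s = t) /\
  (forall t, is_derive (fun s => fst (g s)) t (fst (dg t))) /\
  (forall t, is_derive (fun s => snd (g s)) t (snd (dg t))) /\
  (forall t, continuous (fun s => fst (dg s)) t) /\
  (forall t, continuous (fun s => snd (dg s)) t) /\
  (forall t, dg t <> (0, 0)) /\
  (forall x, in_boundary Om x <-> exists t, g t = x) /\
  (forall t, exists e, 0 < e /\
     forall s, 0 < s < e -> Om (padd (g t) (pscal s (rotJ (dg t))))).

Definition reflect (Ob u x : pt) : pt :=
  let w := psub x Ob in
  padd Ob (psub (pscal (2 * dot w u / dot u u) u) w).

Definition axially_symmetric (Om : pt -> Prop) (Ob u : pt) : Prop :=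
  forall x, Om x <-> Om (reflect Ob u x).

(** ** Polygons: a q-gon is [p : nat -> pt], vertices [p 0, ..., p (q-1)],
    indices read modulo q. *)

Definition in_Pq (Om : pt -> Prop) (g : R -> pt) (Ob u : pt) (q : nat)
  (p : nat -> pt) : Prop :=
  (* vertices on the boundary, in positive cyclic order *)
  (exists t : nat -> R,
      (forall j, (j < q)%nat -> g (t j) = p j) /\
      (forall j, (S j < q)%nat -> t j < t (S j)) /\
      t (pred q) < t 0%nat + 1) /\
  (forall j, (j < q)%nat -> exists k, (k < q)%nat /\ reflect Ob u (p j) = p k) /\
  p 0%nat = Ob.

(** (shoelace) area of the polygon *)
Definition area (q : nat) (p : nat -> pt) : R :=
  / 2 * sum_f_R0 (fun j => cross (p j) (p ((S j) mod q)%nat)) (pred q).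

(** ** Symplectic billiard.  [bounce g dg q1 q2 q3]: the chord (q1,q2) is sent
    to (q2,q3): q1,q2,q3 on the boundary and q3 is the point of the boundary
    such that the line q1 q3 is parallel to the tangent at q2; when q3 = q1
    this line is the tangent line at q1, i.e. it is parallel to the tangent
    at q2. *)
Definition bounce (g dg : R -> pt) (q1 q2 q3 : pt) : Prop :=
  exists t1 t2 t3, g t1 = q1 /\ g t2 = q2 /\ g t3 = q3 /\
    cross (psub q3 q1) (dg t2) = 0 /\
    (q3 = q1 -> cross (dg t1) (dg t2) = 0).

Definition periodic_orbit (g dg : R -> pt) (q : nat) (p : nat -> pt) : Prop :=
  forall j, (j < q)%nat ->
    bounce g dg (p ((j + q - 1) mod q)%nat) (p j) (p ((S j) mod q)%nat).

(* Main.v *)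
Require Import Defs.
From Stdlib Require Import Reals Lra Lia Psatz ZArith.
From Coquelicot Require Import Coquelicot.
Open Scope R_scope.

Definition HH (Ob u x : pt) : R := dot (psub x Ob) u.
Definition SS (Ob u x : pt) : R := cross u (psub x Ob).

Lemma uu_pos (u : pt) : u <> (0,0) -> 0 < fst u * fst u + snd u * snd u.
Proof.
  destruct u as [u1 u2]; simpl; intros H.
  destruct (Req_dec u1 0); destruct (Req_dec u2 0); subst; try nra.
  exfalso; apply H; reflexivity.
Qed.

Lemma HH_refl Ob u x : u <> (0,0) -> HH Ob u (reflect Ob u x) = HH Ob u x.
Proof.
  intros Hu; pose proof (uu_pos u Hu).
  destruct u as [u1 u2], x as [x1 x2], Ob as [o1 o2];
  unfold HH, reflect, dot, psub, padd, pscal in *; simpl in *. field; lra.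
Qed.

Lemma SS_refl Ob u x : u <> (0,0) -> SS Ob u (reflect Ob u x) = - SS Ob u x.
Proof.
  intros Hu; pose proof (uu_pos u Hu).
  destruct u as [u1 u2], x as [x1 x2], Ob as [o1 o2];
  unfold SS, reflect, cross, dot, psub, padd, pscal in *; simpl in *. field; lra.
Qed.

Lemma coord_eq Ob u x y : u <> (0,0) -> HH Ob u x = HH Ob u y -> SS Ob u x = SS Ob u y -> x = y.
Proof.
  intros Hu H1 H2; pose proof (uu_pos u Hu).
  destruct u as [u1 u2], x as [x1 x2], y as [y1 y2], Ob as [o1 o2];
  unfold HH, SS, cross, dot, psub in *; simpl in *.
  assert (D : (x1-y1)*u1 + (x2-y2)*u2 = 0) by lra.
  assert (C : u1*(x2-y2) - u2*(x1-y1) = 0) by lra.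
  assert (A : (x1 - y1) * (u1*u1+u2*u2) = 0).
  { replace ((x1 - y1) * (u1*u1+u2*u2)) with (u1*((x1-y1)*u1 + (x2-y2)*u2) - u2*(u1*(x2-y2) - u2*(x1-y1))) by ring.
    rewrite D, C; ring. }
  assert (B : (x2 - y2) * (u1*u1+u2*u2) = 0).
  { replace ((x2 - y2) * (u1*u1+u2*u2)) with (u2*((x1-y1)*u1 + (x2-y2)*u2) + u1*(u1*(x2-y2) - u2*(x1-y1))) by ring.
    rewrite D, C; ring. }
  apply Rmult_integral in A; apply Rmult_integral in B.
  destruct A; [|lra]; destruct B; [|lra].
  replace x1 with y1 by lra; replace x2 with y2 by lra; reflexivity.
Qed.

Lemma refl_refl Ob u x : u <> (0,0) -> reflect Ob u (reflect Ob u x) = x.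
Proof.
  intros Hu; apply (coord_eq Ob u); auto.
  - rewrite !HH_refl; auto.
  - rewrite !SS_refl; auto; ring.
Qed.

Lemma refl_Ob Ob u : u <> (0,0) -> reflect Ob u Ob = Ob.
Proof.
  intros Hu; apply (coord_eq Ob u); auto.
  - rewrite HH_refl; auto.
  - rewrite SS_refl; auto. unfold SS, cross, psub; simpl; ring.
Qed.

Lemma dist2_refl Ob u x y : u <> (0,0) ->
  dist2 (reflect Ob u x) (reflect Ob u y) = dist2 x y.
Proof.
  intros Hu; pose proof (uu_pos u Hu).
  destruct u as [u1 u2], x as [x1 x2], y as [y1 y2], Ob as [o1 o2];
  unfold dist2, reflect, dot, psub, padd, pscal in *; simpl in *. field; lra.
Qed.

Lemma HH_comb Ob u l a b :
  HH Ob u (padd (pscal (1 - l) a) (pscal l b)) = (1-l) * HH Ob u a + l * HH Ob u b.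
Proof. destruct u, a, b, Ob; unfold HH, dot, psub, padd, pscal; simpl; ring. Qed.

Lemma SS_comb Ob u l a b :
  SS Ob u (padd (pscal (1 - l) a) (pscal l b)) = (1-l) * SS Ob u a + l * SS Ob u b.
Proof. destruct u, a, b, Ob; unfold SS, cross, psub, padd, pscal; simpl; ring. Qed.

Lemma HH_Ob Ob u : HH Ob u Ob = 0.
Proof. unfold HH, dot, psub; simpl; ring. Qed.
Lemma SS_Ob Ob u : SS Ob u Ob = 0.
Proof. unfold SS, cross, psub; simpl; ring. Qed.


Lemma closure_refl Om Ob u x : u <> (0,0) -> axially_symmetric Om Ob u ->
  in_closure Om x -> in_closure Om (reflect Ob u x).
Proof.
  intros Hu Hs Hx e He. destruct (Hx e He) as [y [Hy Hd]].
  exists (reflect Ob u y). split.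
  - apply (proj1 (Hs y)); exact Hy.
  - rewrite dist2_refl; auto.
Qed.

Lemma boundary_refl Om Ob u x : u <> (0,0) -> axially_symmetric Om Ob u ->
  in_boundary Om x -> in_boundary Om (reflect Ob u x).
Proof.
  intros Hu Hs [Hc Hn]. split.
  - apply closure_refl; auto.
  - intros H. apply (proj1 (Hs _)) in H. rewrite refl_refl in H; auto.
Qed.

Lemma Om_closure Om x : Om x -> in_closure Om x.
Proof.
  intros H e He; exists x; split; auto.
  unfold dist2, dot, psub; simpl. nra.
Qed.

Lemma seg_Om Om Ob u a c b l : u <> (0,0) -> strictly_convex_domain Om ->
  in_closure Om a -> in_closure Om c -> a <> c -> 0 < l < 1 ->
  HH Ob u b = (1-l) * HH Ob u a + l * HH Ob u c ->
  SS Ob u b = (1-l) * SS Ob u a + l * SS Ob u c -> Om b.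
Proof.
  intros Hu [_ [_ [_ Hc]]] Ha Hcc Hac Hl H1 H2.
  replace b with (padd (pscal (1 - l) a) (pscal l c)).
  - apply Hc; auto.
  - apply (coord_eq Ob u); auto; rewrite ?HH_comb, ?SS_comb; lra.
Qed.

Lemma same_side_aux Om Ob u x y : u <> (0,0) -> strictly_convex_domain Om ->
  axially_symmetric Om Ob u ->
  in_boundary Om x -> in_boundary Om y -> HH Ob u x = HH Ob u y ->
  SS Ob u y <> 0 -> 0 < SS Ob u x / SS Ob u y < 1 -> False.
Proof.
  intros Hu HOm Hs Hx Hy HH1 Hy0 Hr.
  set (r := SS Ob u x / SS Ob u y) in *.
  assert (Hsx : SS Ob u x = r * SS Ob u y) by (unfold r; field; auto).
  apply (proj2 Hx).
  apply (seg_Om Om Ob u (reflect Ob u y) y x ((1 + r)/2)); auto.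
  - apply closure_refl; auto. apply Hy.
  - apply Hy.
  - intros E. assert (SS Ob u (reflect Ob u y) = SS Ob u y) by (rewrite E; auto).
    rewrite SS_refl in H; auto. lra.
  - lra.
  - rewrite HH_refl; auto. lra.
  - rewrite SS_refl; auto. rewrite Hsx. field.
Qed.

Lemma same_side Om Ob u x y : u <> (0,0) -> strictly_convex_domain Om ->
  axially_symmetric Om Ob u ->
  in_boundary Om x -> in_boundary Om y -> HH Ob u x = HH Ob u y ->
  0 < SS Ob u x * SS Ob u y -> x = y.
Proof.
  intros Hu HOm Hs Hx Hy HH1 Hp.
  assert (Hx0 : SS Ob u x <> 0) by (intro E; rewrite E in Hp; lra).
  assert (Hy0 : SS Ob u y <> 0) by (intro E; rewrite E in Hp; lra).
  assert (Hq : 0 < SS Ob u x / SS Ob u y).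
  { replace (SS Ob u x / SS Ob u y) with (SS Ob u x * SS Ob u y / (SS Ob u y * SS Ob u y)) by (field; auto).
    apply Rdiv_lt_0_compat; auto. nra. }
  destruct (Rtotal_order (SS Ob u x / SS Ob u y) 1) as [Hl|[He|Hg]].
  - exfalso; apply (same_side_aux Om Ob u x y); auto.
  - apply (coord_eq Ob u); auto.
    assert (E : SS Ob u x = (SS Ob u x / SS Ob u y) * SS Ob u y) by (field; auto).
    rewrite He in E. lra.
  - exfalso; apply (same_side_aux Om Ob u y x); auto.
    split.
    + replace (SS Ob u y / SS Ob u x) with (/ (SS Ob u x / SS Ob u y)) by (field; auto).
      apply Rinv_0_lt_compat; lra.
    + replace (SS Ob u y / SS Ob u x) with (/ (SS Ob u x / SS Ob u y)) by (field; auto).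
      rewrite <- Rinv_1. apply Rinv_lt_contravar; lra.
Qed.

Lemma axis3 Om Ob u a b c : u <> (0,0) -> strictly_convex_domain Om ->
  in_boundary Om a -> in_boundary Om b -> in_boundary Om c ->
  SS Ob u a = 0 -> SS Ob u b = 0 -> SS Ob u c = 0 ->
  HH Ob u a < HH Ob u b < HH Ob u c -> False.
Proof.
  intros Hu HOm Ha Hb Hc Sa Sb Sc Hlt.
  apply (proj2 Hb).
  apply (seg_Om Om Ob u a c b ((HH Ob u b - HH Ob u a)/(HH Ob u c - HH Ob u a))); auto.
  - apply Ha.
  - apply Hc.
  - intros E; rewrite E in Hlt; lra.
  - split.
    + apply Rdiv_lt_0_compat; lra.
    + apply (Rmult_lt_reg_r (HH Ob u c - HH Ob u a)); [lra|].
      unfold Rdiv; rewrite Rmult_assoc, Rinv_l; lra.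
  - field; lra.
  - rewrite Sa, Sb, Sc; ring.
Qed.

Lemma axis_bound Om Ob u x O2 : u <> (0,0) -> strictly_convex_domain Om ->
  axially_symmetric Om Ob u ->
  in_boundary Om Ob -> in_boundary Om O2 -> in_boundary Om x ->
  SS Ob u O2 = 0 -> SS Ob u x <> 0 -> HH Ob u O2 <> 0 ->
  0 < HH Ob u x * HH Ob u O2 < HH Ob u O2 * HH Ob u O2.
Proof.
  intros Hu HOm Hs HO HO2 Hx S2 Sx K.
  set (k := HH Ob u O2) in *. set (h := HH Ob u x).
  set (m := padd (pscal (1 - /2) x) (pscal (/2) (reflect Ob u x))).
  assert (Hm : Om m).
  { unfold m. apply HOm; [apply Hx | apply closure_refl; auto; apply Hx | | lra].
    intros E. assert (SS Ob u x = SS Ob u (reflect Ob u x)) by (rewrite <- E; auto).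
    rewrite SS_refl in H; auto. lra. }
  assert (Hmh : HH Ob u m = h) by (unfold m; rewrite HH_comb, HH_refl; auto; unfold h; lra).
  assert (Hms : SS Ob u m = 0) by (unfold m; rewrite SS_comb, SS_refl; auto; lra).
  assert (mO2 : m <> O2) by (intro E; rewrite E in Hm; apply (proj2 HO2); auto).
  assert (mO : m <> Ob) by (intro E; rewrite E in Hm; apply (proj2 HO); auto).
  split.
  - destruct (Rlt_dec 0 (h * k)) as [P|P]; [exact P|exfalso].
    destruct (Req_dec h 0) as [E|E].
    + apply mO, (coord_eq Ob u); auto. rewrite Hmh, HH_Ob; auto. rewrite Hms, SS_Ob; auto.
    + apply (proj2 HO). apply (seg_Om Om Ob u m O2 Ob (h/(h-k))); auto.
      * apply Om_closure; auto.
      * apply HO2.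
      * assert (h*k < 0) by (assert (h*k <> 0) by (apply Rmult_integral_contrapositive; auto); lra).
        split.
        -- destruct (Rlt_dec 0 h); [apply Rdiv_lt_0_compat; nra|].
           replace (h/(h-k)) with ((-h)/(k-h)) by (field; nra). apply Rdiv_lt_0_compat; nra.
        -- destruct (Rlt_dec 0 h).
           ++ apply (Rmult_lt_reg_r (h-k)); [nra|]. unfold Rdiv; rewrite Rmult_assoc, Rinv_l; nra.
           ++ replace (h/(h-k)) with ((-h)/(k-h)) by (field; nra).
              apply (Rmult_lt_reg_r (k-h)); [nra|]. unfold Rdiv; rewrite Rmult_assoc, Rinv_l; nra.
      * rewrite HH_Ob, Hmh. fold k. field. intro E2.
        assert (h = k) by lra. subst h. rewrite H in *. nra.
      * rewrite SS_Ob, Hms, S2. ring.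
  - destruct (Rlt_dec (h * k) (k * k)) as [P|P]; [exact P|exfalso].
    destruct (Req_dec h k) as [E|E].
    + apply mO2, (coord_eq Ob u); auto. rewrite Hmh; auto. rewrite Hms; auto.
    + apply (proj2 HO2). apply (seg_Om Om Ob u m Ob O2 (1 - k/h)); auto.
      * apply Om_closure; auto.
      * apply HO.
      * assert (Hh : h <> 0) by (intro Z; rewrite Z in P; nra).
        assert (0 < k/h < 1).
        { destruct (Rlt_dec 0 h); destruct (Rlt_dec 0 k).
          - split; [apply Rdiv_lt_0_compat; lra|].
            apply (Rmult_lt_reg_r h); [lra|]. unfold Rdiv; rewrite Rmult_assoc, Rinv_l; nra.
          - exfalso. assert (k<0) by lra. nra.
          - exfalso. assert (h<0) by lra. nra.
          - replace (k/h) with ((-k)/(-h)) by (field; auto).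
            split; [apply Rdiv_lt_0_compat; lra|].
            apply (Rmult_lt_reg_r (-h)); [lra|]. unfold Rdiv; rewrite Rmult_assoc, Rinv_l; nra. }
        lra.
      * rewrite HH_Ob, Hmh. fold k. field. intro Z; rewrite Z in P; nra.
      * rewrite SS_Ob, Hms, S2. ring.
Qed.


Lemma dpl_eq f x l l' : derivable_pt_lim f x l -> l = l' -> derivable_pt_lim f x l'.
Proof. intros H E; subst; auto. Qed.

Lemma dpl_ext f h x l : (forall t, f t = h t) -> derivable_pt_lim f x l -> derivable_pt_lim h x l.
Proof.
  intros E H. apply is_derive_Reals. apply is_derive_Reals in H.
  apply (is_derive_ext f); auto.
Qed.

Definition pd (f : R -> pt) (t : R) (v : pt) : Prop :=
  derivable_pt_lim (fun s => fst (f s)) t (fst v) /\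
  derivable_pt_lim (fun s => snd (f s)) t (snd v).

Lemma pd_const c t : pd (fun _ => c) t (0,0).
Proof. split; simpl; apply derivable_pt_lim_const. Qed.

Lemma pd_id_g g dg t : (forall t, is_derive (fun s => fst (g s)) t (fst (dg t))) ->
  (forall t, is_derive (fun s => snd (g s)) t (snd (dg t))) -> pd g t (dg t).
Proof. intros H1 H2; split; apply is_derive_Reals; auto. Qed.

Lemma pd_sub f h t v w : pd f t v -> pd h t w -> pd (fun s => psub (f s) (h s)) t (psub v w).
Proof.
  intros [A B] [C D]; split; simpl; apply derivable_pt_lim_minus; auto.
Qed.

Lemma pd_comb f t v a b c : pd f t v ->
  pd (fun s => padd c (psub (pscal (2 * dot (psub (f s) a) b / dot b b) b) (psub (f s) a))) t
     (psub (pscal (2 * dot v b / dot b b) b) v).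
Proof.
  intros [A B]. destruct b as [b1 b2], a as [a1 a2], c as [c1 c2], v as [v1 v2].
  unfold dot, psub, padd, pscal in *; simpl in *.
  split.
  - eapply dpl_eq.
    + apply derivable_pt_lim_plus; [apply derivable_pt_lim_const|].
      apply derivable_pt_lim_minus; [|apply derivable_pt_lim_minus; [exact A|apply derivable_pt_lim_const]].
      apply derivable_pt_lim_mult; [|apply derivable_pt_lim_const].
      apply derivable_pt_lim_mult; [|apply derivable_pt_lim_const].
      apply derivable_pt_lim_mult; [apply derivable_pt_lim_const|].
      apply derivable_pt_lim_plus; apply derivable_pt_lim_mult;
        try apply derivable_pt_lim_const;
        apply derivable_pt_lim_minus; try apply derivable_pt_lim_const; eauto.
    + unfold fct_cte, Rdiv; simpl; ring.
  - eapply dpl_eq.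
    + apply derivable_pt_lim_plus; [apply derivable_pt_lim_const|].
      apply derivable_pt_lim_minus; [|apply derivable_pt_lim_minus; [exact B|apply derivable_pt_lim_const]].
      apply derivable_pt_lim_mult; [|apply derivable_pt_lim_const].
      apply derivable_pt_lim_mult; [|apply derivable_pt_lim_const].
      apply derivable_pt_lim_mult; [apply derivable_pt_lim_const|].
      apply derivable_pt_lim_plus; apply derivable_pt_lim_mult;
        try apply derivable_pt_lim_const;
        apply derivable_pt_lim_minus; try apply derivable_pt_lim_const; eauto.
    + unfold fct_cte, Rdiv; simpl; ring.
Qed.

Definition Lr (u v : pt) : pt := psub (pscal (2 * dot v u / dot u u) u) v.

Lemma pd_refl f t v Ob u : pd f t v ->
  pd (fun s => reflect Ob u (f s)) t (Lr u v).
Proof. intros H. apply (pd_comb f t v Ob u Ob H). Qed.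

Lemma cross_d f h t v w : pd f t v -> pd h t w ->
  derivable_pt_lim (fun s => cross (f s) (h s)) t (cross v (h t) + cross (f t) w).
Proof.
  intros [A B] [C D]. unfold cross. eapply dpl_eq.
  - apply derivable_pt_lim_minus; apply derivable_pt_lim_mult; eauto.
    - cbv beta; ring.
Qed.

Lemma dot_d f t v c : pd f t v ->
  derivable_pt_lim (fun s => dot (f s) c) t (dot v c).
Proof.
  intros [A B]. unfold dot. eapply dpl_eq.
  - apply derivable_pt_lim_plus; apply derivable_pt_lim_mult; eauto; apply derivable_pt_lim_const.
  - unfold fct_cte; ring.
Qed.

Lemma dpl_max f a b c l : derivable_pt_lim f c l -> a < c < b ->
  (forall x, a < x < b -> f x <= f c) -> l = 0.
Proof.
  intros H Hc Hm. set (pr := exist (fun l => derivable_pt_lim f c l) l H : derivable_pt f c).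
  change l with (derive_pt f c pr). apply (deriv_maximum f a b c pr); try lra.
  intros; apply Hm; lra.
Qed.

Lemma dpl_min f a b c l : derivable_pt_lim f c l -> a < c < b ->
  (forall x, a < x < b -> f c <= f x) -> l = 0.
Proof.
  intros H Hc Hm. set (pr := exist (fun l => derivable_pt_lim f c l) l H : derivable_pt f c).
  change l with (derive_pt f c pr). apply (deriv_minimum f a b c pr); try lra.
  intros; apply Hm; lra.
Qed.

Lemma dpl_cont f x l : derivable_pt_lim f x l -> continuity_pt f x.
Proof.
  intros H. apply derivable_continuous_pt. exact (exist _ l H).
Qed.


Lemma g_per_nat (g : R -> pt) : (forall t, g (t + 1) = g t) ->
  forall n t, g (t + INR n) = g t.
Proof.
  intros H n; induction n; intros t.
  - simpl. rewrite Rplus_0_r; auto.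
  - rewrite S_INR, <- Rplus_assoc, H; auto.
Qed.

Lemma g_per_Z (g : R -> pt) : (forall t, g (t + 1) = g t) ->
  forall z t, g (t + IZR z) = g t.
Proof.
  intros H z t. destruct (Z_le_gt_dec 0 z) as [Hz|Hz].
  - destruct (IZN z Hz) as [n ->]. rewrite <- INR_IZR_INZ. apply g_per_nat; auto.
  - assert (Hz' : (0 <= - z)%Z) by lia. destruct (IZN (-z) Hz') as [n Hn].
    replace z with (- Z.of_nat n)%Z by lia. rewrite opp_IZR, <- INR_IZR_INZ.
    rewrite <- (g_per_nat g H n (t + - INR n)). f_equal; ring.
Qed.

Lemma frac_ex t : exists z, 0 <= t - IZR z < 1.
Proof.
  exists (up t - 1)%Z. rewrite minus_IZR. destruct (archimed t). simpl. lra.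
Qed.

Lemma IZR_small z : -1 < IZR z < 1 -> z = 0%Z.
Proof.
  intros [A B]. apply lt_IZR in B. apply lt_IZR in A. lia.
Qed.

Lemma g_inj_win Om g dg a s t : ccw_C1_boundary_param Om g dg ->
  a <= s < a + 1 -> a <= t < a + 1 -> g s = g t -> s = t.
Proof.
  intros [Hp [Hi _]] Hs Ht E.
  destruct (frac_ex s) as [zs Hzs]. destruct (frac_ex t) as [zt Hzt].
  assert (E2 : s - IZR zs = t - IZR zt).
  { apply Hi; auto.
    rewrite <- (g_per_Z g Hp zs (s - IZR zs)), <- (g_per_Z g Hp zt (t - IZR zt)).
    replace (s - IZR zs + IZR zs) with s by ring. replace (t - IZR zt + IZR zt) with t by ring.
    auto. }
  assert (Z : (zs - zt)%Z = 0%Z).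
  { apply IZR_small. rewrite minus_IZR. lra. }
  assert (IZR zs = IZR zt) by (f_equal; lia). lra.
Qed.

Lemma g_boundary Om g dg t : ccw_C1_boundary_param Om g dg -> in_boundary Om (g t).
Proof.
  intros Hg. destruct Hg as [_ [_ [_ [_ [_ [_ [_ [Hb _]]]]]]]]. apply Hb. eauto.
Qed.

Lemma g_param_win Om g dg x a : ccw_C1_boundary_param Om g dg -> in_boundary Om x ->
  exists t, a <= t < a + 1 /\ g t = x.
Proof.
  intros Hg Hx. pose proof Hg as Hg'.
  destruct Hg as [Hp [_ [_ [_ [_ [_ [_ [Hb _]]]]]]]].
  destruct (proj1 (Hb x) Hx) as [t0 Ht0].
  destruct (frac_ex (t0 - a)) as [z Hz].
  exists (t0 - IZR z). split; [lra|].
  rewrite <- (g_per_Z g Hp z). replace (t0 - IZR z + IZR z) with t0 by ring. auto.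
Qed.

Lemma pd_g Om g dg t : ccw_C1_boundary_param Om g dg -> pd g t (dg t).
Proof.
  intros [_ [_ [H1 [H2 _]]]]. apply pd_id_g; auto.
Qed.

Lemma phi_deriv Om g dg Ob u t : ccw_C1_boundary_param Om g dg ->
  derivable_pt_lim (fun s => HH Ob u (g s)) t (dot (dg t) u).
Proof.
  intros Hg. unfold HH. eapply dpl_eq.
  - apply dot_d. apply pd_sub; [apply (pd_g Om g dg t Hg)|apply pd_const].
  - unfold dot, psub; simpl; ring.
Qed.

Lemma phi_cont Om g dg Ob u : ccw_C1_boundary_param Om g dg ->
  continuity (fun s => HH Ob u (g s)).
Proof. intros Hg t. eapply dpl_cont. apply (phi_deriv Om g dg Ob u t Hg). Qed.

Lemma psi_cont Om g dg Ob u : ccw_C1_boundary_param Om g dg ->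
  continuity (fun s => SS Ob u (g s)).
Proof.
  intros Hg t. eapply dpl_cont. unfold SS. apply cross_d.
  - apply pd_const.
  - apply pd_sub; [apply (pd_g Om g dg t Hg)|apply pd_const].
Qed.


Definition SETUP Om g dg Ob u T0 : Prop :=
  strictly_convex_domain Om /\ ccw_C1_boundary_param Om g dg /\ u <> (0,0) /\
  axially_symmetric Om Ob u /\ in_boundary Om Ob /\ g T0 = Ob.

Lemma IVT_strict f x y : continuity f -> x < y -> f x * f y < 0 ->
  exists z, x < z < y /\ f z = 0.
Proof.
  intros Hc Hxy Hp. destruct (IVT_cor f x y Hc ltac:(lra) ltac:(lra)) as [z [Hz Fz]].
  exists z; split; auto. split.
  - destruct (Req_dec x z); [subst; rewrite Fz in Hp; lra|lra].
  - destruct (Req_dec z y); [subst; rewrite Fz in Hp; lra|lra].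
Qed.

Lemma sign_trans a b c : a * b > 0 -> b * c > 0 -> a * c > 0.
Proof.
  intros H1 H2. destruct (Rlt_dec 0 b).
  - assert (a > 0) by nra. assert (c > 0) by nra. nra.
  - assert (b < 0) by (destruct (Req_dec b 0); [subst; lra|lra]).
    assert (a < 0) by nra. assert (c < 0) by nra. nra.
Qed.

Lemma axis_two Om Ob u x y : u <> (0,0) -> strictly_convex_domain Om ->
  in_boundary Om Ob -> in_boundary Om x -> in_boundary Om y ->
  SS Ob u x = 0 -> SS Ob u y = 0 -> x <> Ob -> y <> Ob -> x <> y -> False.
Proof.
  intros Hu HOm HO Hx Hy Sx Sy n1 n2 n3.
  assert (SO := SS_Ob Ob u). assert (HO0 := HH_Ob Ob u).
  assert (a1 : HH Ob u x <> 0) by (intro E; apply n1, (coord_eq Ob u); auto; congruence).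
  assert (a2 : HH Ob u y <> 0) by (intro E; apply n2, (coord_eq Ob u); auto; congruence).
  assert (a3 : HH Ob u x <> HH Ob u y) by (intro E; apply n3, (coord_eq Ob u); auto; congruence).
  destruct (Rlt_dec (HH Ob u x) 0); destruct (Rlt_dec (HH Ob u y) 0);
  destruct (Rlt_dec (HH Ob u x) (HH Ob u y)).
  all: first
   [ apply (axis3 Om Ob u x y Ob); auto; lra
   | apply (axis3 Om Ob u y x Ob); auto; lra
   | apply (axis3 Om Ob u x Ob y); auto; lra
   | apply (axis3 Om Ob u y Ob x); auto; lra
   | apply (axis3 Om Ob u Ob x y); auto; lra
   | apply (axis3 Om Ob u Ob y x); auto; lra ].
Qed.


Definition psi Ob u (g : R -> pt) t := SS Ob u (g t).
Definition phi Ob u (g : R -> pt) t := HH Ob u (g t).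

Lemma g_inj_J Om g dg Ob u T0 s t : SETUP Om g dg Ob u T0 ->
  T0 <= s < T0 + 1 -> T0 <= t < T0 + 1 -> g s = g t -> s = t.
Proof. intros [_ [Hg _]]. apply (g_inj_win Om g dg T0 s t Hg). Qed.

Lemma struct_ts Om g dg Ob u T0 : SETUP Om g dg Ob u T0 ->
  exists ts, T0 < ts < T0 + 1 /\ psi Ob u g ts = 0 /\
   (forall t, T0 < t < T0 + 1 -> t <> ts -> psi Ob u g t <> 0) /\
   (forall s t, T0 < s < ts -> T0 < t < ts -> psi Ob u g s * psi Ob u g t > 0) /\
   (forall s t, ts < s < T0 + 1 -> ts < t < T0 + 1 -> psi Ob u g s * psi Ob u g t > 0) /\
   (forall s t, T0 < s < ts -> ts < t < T0 + 1 -> psi Ob u g s * psi Ob u g t < 0).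
Proof.
  intros HS. pose proof HS as [HOm [Hg [Hu [Hsym [HO HT0]]]]].
  assert (Hc := psi_cont Om g dg Ob u Hg). fold (psi Ob u g) in Hc.
  assert (bd : forall t, in_boundary Om (g t)) by (intro; eapply g_boundary; eauto).
  assert (notO : forall t, T0 < t < T0 + 1 -> g t <> Ob).
  { intros t Ht E. rewrite <- HT0 in E. apply (g_inj_J Om g dg Ob u T0) in E; [lra|auto|lra|lra]. }
  assert (Hoff : exists t1, T0 < t1 < T0 + 1 /\ psi Ob u g t1 <> 0).
  { destruct (Req_dec (psi Ob u g (T0 + /4)) 0) as [E1|E1]; [|exists (T0 + /4); split; [lra|auto]].
    destruct (Req_dec (psi Ob u g (T0 + /2)) 0) as [E2|E2]; [|exists (T0 + /2); split; [lra|auto]].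
    exfalso. apply (axis_two Om Ob u (g (T0 + /4)) (g (T0 + /2))); auto.
    all: try (apply notO; lra).
    intro E. apply (g_inj_J Om g dg Ob u T0) in E; [lra|auto|lra|lra]. }
  destruct Hoff as [t1 [Ht1 Pt1]].
  destruct (g_param_win Om g dg (reflect Ob u (g t1)) T0 Hg) as [r [Hr Gr]].
  { apply boundary_refl; auto. }
  assert (Pr : psi Ob u g r = - psi Ob u g t1).
  { unfold psi. rewrite Gr, SS_refl; auto. }
  assert (rT0 : r <> T0).
  { intro E. subst r. rewrite HT0 in Gr. apply (f_equal (reflect Ob u)) in Gr.
    rewrite refl_refl, refl_Ob in Gr; auto. apply (notO t1); auto. }
  assert (zero_ex : exists ts, T0 < ts < T0 + 1 /\ psi Ob u g ts = 0).
  { destruct (Rlt_dec t1 r).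
    - destruct (IVT_strict (psi Ob u g) t1 r) as [z [Hz Fz]]; auto.
      + rewrite Pr. assert (psi Ob u g t1 * psi Ob u g t1 > 0) by (apply Rsqr_pos_lt in Pt1; unfold Rsqr in Pt1; lra). nra.
      + exists z; split; [lra|auto].
    - assert (r < t1) by (destruct (Req_dec r t1); [subst; lra|lra]).
      destruct (IVT_strict (psi Ob u g) r t1) as [z [Hz Fz]]; auto.
      + rewrite Pr. assert (psi Ob u g t1 * psi Ob u g t1 > 0) by (apply Rsqr_pos_lt in Pt1; unfold Rsqr in Pt1; lra). nra.
      + exists z; split; [lra|auto]. }
  destruct zero_ex as [ts [Hts Pts]].
  assert (uniq : forall t, T0 < t < T0 + 1 -> t <> ts -> psi Ob u g t <> 0).
  { intros t Ht Hne E. apply (axis_two Om Ob u (g t) (g ts)); auto.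
    all: try (apply notO; lra).
    intro E2. apply (g_inj_J Om g dg Ob u T0) in E2; [lra|auto|lra|lra]. }
  assert (nz : forall a b, psi Ob u g a <> 0 -> psi Ob u g b <> 0 ->
     psi Ob u g a * psi Ob u g b > 0 \/ psi Ob u g a * psi Ob u g b < 0).
  { intros a b Ha Hb. assert (psi Ob u g a * psi Ob u g b <> 0) by (apply Rmult_integral_contrapositive; auto). lra. }
  assert (const_int : forall a b, T0 <= a -> b <= T0 + 1 -> (ts <= a \/ b <= ts) ->
     forall s t, a < s < b -> a < t < b -> psi Ob u g s * psi Ob u g t > 0).
  { intros a b Ha Hb Hab s t Hs Ht.
    assert (ns : psi Ob u g s <> 0) by (apply uniq; lra).
    assert (nt : psi Ob u g t <> 0) by (apply uniq; lra).
    destruct (nz s t ns nt) as [P|P]; auto. exfalso.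
    destruct (Rtotal_order s t) as [L|[L|L]].
    - destruct (IVT_strict (psi Ob u g) s t) as [z [Hz Fz]]; auto.
      revert Fz; apply uniq; lra.
    - subst. nra.
    - destruct (IVT_strict (psi Ob u g) t s) as [z [Hz Fz]]; auto; [lra|].
      revert Fz; apply uniq; lra. }
  exists ts. split; [auto|split; [auto|split; [auto|split; [|split]]]].
  - intros s t Hs Ht. apply (const_int T0 ts); auto; lra.
  - intros s t Hs Ht. apply (const_int ts (T0+1)); auto; lra.
  - intros s t Hs Ht.
    assert (ns : psi Ob u g s <> 0) by (apply uniq; lra).
    assert (nt : psi Ob u g t <> 0) by (apply uniq; lra).
    destruct (nz s t ns nt) as [P|P]; auto. exfalso.
    destruct (g_param_win Om g dg (reflect Ob u (g s)) T0 Hg) as [r' [Hr' Gr']].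
    { apply boundary_refl; auto. }
    assert (Pr' : psi Ob u g r' = - psi Ob u g s).
    { unfold psi. rewrite Gr', SS_refl; auto. }
    assert (r'T0 : r' <> T0).
    { intro E. subst r'. rewrite HT0 in Gr'. apply (f_equal (reflect Ob u)) in Gr'.
      rewrite refl_refl, refl_Ob in Gr'; auto. apply (notO s); auto; lra. }
    assert (r'ts : r' <> ts) by (intro E; subst; rewrite Pts in Pr'; lra).
    assert (ss : psi Ob u g s * psi Ob u g s > 0) by (apply Rsqr_pos_lt in ns; unfold Rsqr in ns; lra).
    destruct (Rlt_dec r' ts).
    + assert (psi Ob u g r' * psi Ob u g s > 0) by (apply (const_int T0 ts); auto; lra).
      rewrite Pr' in H. lra.
    + assert (psi Ob u g r' * psi Ob u g t > 0) by (apply (const_int ts (T0+1)); auto; lra).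
      assert (psi Ob u g r' * psi Ob u g s > 0).
      { apply (sign_trans _ (psi Ob u g t)); auto. rewrite Rmult_comm; auto. }
      rewrite Pr' in H0. lra.
Qed.


Lemma phh_deriv Om g dg Ob u k d t : ccw_C1_boundary_param Om g dg ->
  derivable_pt_lim (fun s => k * HH Ob u (g s) - d) t (k * dot (dg t) u).
Proof.
  intros Hg. eapply dpl_eq.
  - apply derivable_pt_lim_minus; [|apply derivable_pt_lim_const].
    apply derivable_pt_lim_mult; [apply derivable_pt_lim_const|].
    apply (phi_deriv Om g dg Ob u t Hg).
  - unfold fct_cte; ring.
Qed.

Lemma phh_cont Om g dg Ob u k d : ccw_C1_boundary_param Om g dg ->
  continuity (fun s => k * HH Ob u (g s) - d).
Proof. intros Hg t. eapply dpl_cont. apply (phh_deriv Om g dg Ob u k d t Hg). Qed.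

Lemma struct_full Om g dg Ob u T0 : SETUP Om g dg Ob u T0 ->
  exists ts k, T0 < ts < T0 + 1 /\ psi Ob u g ts = 0 /\ k <> 0 /\
   (forall t, T0 < t < T0 + 1 -> t <> ts -> psi Ob u g t <> 0) /\
   (forall s t, T0 < s < ts -> T0 < t < ts -> psi Ob u g s * psi Ob u g t > 0) /\
   (forall s t, ts < s < T0 + 1 -> ts < t < T0 + 1 -> psi Ob u g s * psi Ob u g t > 0) /\
   (forall s t, T0 < s < ts -> ts < t < T0 + 1 -> psi Ob u g s * psi Ob u g t < 0) /\
   (forall s t, T0 <= s < t -> t <= ts -> k * phi Ob u g s < k * phi Ob u g t) /\
   (forall s t, ts <= s < t -> t <= T0 + 1 -> k * phi Ob u g t < k * phi Ob u g s) /\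
   dot (dg T0) u = 0 /\ dot (dg ts) u = 0.
Proof.
  intros HS. pose proof HS as [HOm [Hg [Hu [Hsym [HO HT0]]]]].
  destruct (struct_ts Om g dg Ob u T0 HS) as [ts [Hts [Pts [uniq [cA [cB cAB]]]]]].
  assert (bd : forall t, in_boundary Om (g t)) by (intro; eapply g_boundary; eauto).
  assert (tsO : g ts <> Ob).
  { intro E. rewrite <- HT0 in E. apply (g_inj_J Om g dg Ob u T0) in E; [lra|auto|lra|lra]. }
  set (k := HH Ob u (g ts)).
  assert (Hk : k <> 0).
  { intro E. apply tsO, (coord_eq Ob u); auto. rewrite HH_Ob; auto. rewrite SS_Ob; auto. }
  set (f := fun t => k * phi Ob u g t).
  assert (fT0 : f T0 = 0) by (unfold f, phi; rewrite HT0, HH_Ob; ring).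
  assert (fT1 : f (T0 + 1) = 0).
  { unfold f, phi. destruct Hg as [Hp _]. rewrite Hp. exact fT0. }
  assert (fts : f ts = k * k) by reflexivity.
  assert (bnd : forall t, T0 < t < T0 + 1 -> t <> ts -> 0 < f t < k * k).
  { intros t Ht Hne. unfold f, phi. rewrite Rmult_comm.
    apply (axis_bound Om Ob u (g t) (g ts)); auto. apply uniq; auto. }
  assert (fc : forall d, continuity (fun s => f s - d)).
  { intro d. apply (phh_cont Om g dg Ob u k d Hg). }
  assert (ssd : forall s t, psi Ob u g s * psi Ob u g t > 0 -> f s = f t -> s <> t ->
     T0 <= s < T0 + 1 -> T0 <= t < T0 + 1 -> False).
  { intros s t Hp Hf Hne Hs Ht. apply Hne.
    apply (g_inj_J Om g dg Ob u T0); auto.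
    apply (same_side Om Ob u); auto.
    unfold f, phi in Hf. apply Rmult_eq_reg_l in Hf; auto. }
  assert (monoA : forall s t, T0 <= s < t -> t <= ts -> f s < f t).
  { intros s t Hs Ht.
    destruct (Req_dec s T0) as [E|E].
    - subst s. rewrite fT0. destruct (Req_dec t ts) as [E2|E2].
      + subst. rewrite fts. nra.
      + apply bnd; auto; lra.
    - destruct (Req_dec t ts) as [E2|E2].
      + subst t. rewrite fts. apply bnd; lra.
      + destruct (Rtotal_order (f s) (f t)) as [L|[L|L]]; auto; exfalso.
        * apply (ssd s t); auto; try lra. apply cA; lra.
        * destruct (IVT_strict (fun x => f x - f t) T0 s) as [z [Hz Fz]]; auto; [lra| |].
          -- rewrite fT0. assert (0 < f t) by (apply bnd; lra). nra.
          -- apply (ssd z t); try lra. apply cA; lra. }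
  assert (monoB : forall s t, ts <= s < t -> t <= T0 + 1 -> f t < f s).
  { intros s t Hs Ht.
    destruct (Req_dec s ts) as [E|E].
    - subst s. rewrite fts. destruct (Req_dec t (T0+1)) as [E2|E2].
      + subst. rewrite fT1. nra.
      + apply bnd; auto; lra.
    - destruct (Req_dec t (T0+1)) as [E2|E2].
      + subst t. rewrite fT1. apply bnd; lra.
      + destruct (Rtotal_order (f s) (f t)) as [L|[L|L]]; auto; exfalso.
        * destruct (IVT_strict (fun x => f x - f s) t (T0+1)) as [z [Hz Fz]]; auto; [lra| |].
          -- rewrite fT1. assert (0 < f s) by (apply bnd; lra). nra.
          -- apply (ssd z s); try lra. apply cB; lra.
        * apply (ssd s t); auto; try lra. apply cB; lra. }
  exists ts, k. do 9 (split; [auto|]).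
  split.
  - assert (D := phh_deriv Om g dg Ob u k 0 T0 Hg).
    assert (k * dot (dg T0) u = 0).
    { apply (dpl_min _ (T0 - 1) (T0 + 1) T0 _ D); [lra|].
      intros x Hx. rewrite HT0, HH_Ob.
      destruct (Rlt_dec x T0).
      - destruct Hg as [Hp _]. rewrite <- Hp.
        assert (A : x + 1 <= ts \/ ts <= x + 1) by lra. destruct A.
        + assert (f T0 < f (x+1)) by (apply monoA; lra). unfold f, phi in *. rewrite HT0, HH_Ob in *. lra.
        + assert (f (x+1) < f ts \/ x + 1 = ts) by (destruct (Req_dec (x+1) ts); [right; auto| left; apply monoB; lra]).
          assert (0 <= f (x+1)).
          { destruct (Req_dec (x+1) ts) as [E3|E3]; [rewrite E3, fts; nra|]. assert (f (x+1) > 0) by (apply bnd; lra). lra. }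
          unfold f, phi in *. lra.
      - destruct (Req_dec x T0) as [E3|E3]; [rewrite E3, HT0, HH_Ob; lra|].
        destruct (Req_dec x ts) as [E4|E4]; [rewrite E4; fold k; nra|].
        assert (f x > 0) by (apply bnd; lra). unfold f, phi in *. lra. }
    apply Rmult_integral in H. destruct H; [contradiction|auto].
  - assert (D := phh_deriv Om g dg Ob u k 0 ts Hg).
    assert (k * dot (dg ts) u = 0).
    { apply (dpl_max _ T0 (T0 + 1) ts _ D); [lra|].
      intros x Hx. fold k.
      destruct (Req_dec x ts) as [E4|E4]; [rewrite E4; fold k; lra|].
      assert (f x < k * k) by (apply bnd; lra). unfold f, phi in *. lra. }
    apply Rmult_integral in H. destruct H; [contradiction|auto].
Qed.


Definition STRUCT (g dg : R -> pt) Ob u T0 ts c : Prop :=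
   T0 < ts < T0 + 1 /\ psi Ob u g ts = 0 /\ c <> 0 /\
   (forall t, T0 < t < T0 + 1 -> t <> ts -> psi Ob u g t <> 0) /\
   (forall s t, T0 < s < ts -> T0 < t < ts -> psi Ob u g s * psi Ob u g t > 0) /\
   (forall s t, ts < s < T0 + 1 -> ts < t < T0 + 1 -> psi Ob u g s * psi Ob u g t > 0) /\
   (forall s t, T0 < s < ts -> ts < t < T0 + 1 -> psi Ob u g s * psi Ob u g t < 0) /\
   (forall s t, T0 <= s < t -> t <= ts -> c * phi Ob u g s < c * phi Ob u g t) /\
   (forall s t, ts <= s < t -> t <= T0 + 1 -> c * phi Ob u g t < c * phi Ob u g s) /\
   dot (dg T0) u = 0 /\ dot (dg ts) u = 0.

Definition POLY Om g dg Ob u q p t : Prop :=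
  SETUP Om g dg Ob u (t 0%nat) /\ (2 <= q)%nat /\
  (forall j, (j < q)%nat -> g (t j) = p j) /\
  (forall j, (S j < q)%nat -> t j < t (S j)) /\ t (pred q) < t 0%nat + 1 /\
  (forall j, (j < q)%nat -> exists k, (k < q)%nat /\ reflect Ob u (p j) = p k) /\
  p 0%nat = Ob.

Lemma tmono q t : (forall j, (S j < q)%nat -> t j < t (S j)) ->
  forall i j, (i < j)%nat -> (j < q)%nat -> t i < t j.
Proof.
  intros H i j Hij. induction Hij; intros Hq.
  - apply H; auto.
  - apply Rlt_trans with (t m); [apply IHHij; lia| apply H; lia].
Qed.

Lemma tle q t : (forall j, (S j < q)%nat -> t j < t (S j)) ->
  forall i j, (i <= j)%nat -> (j < q)%nat -> t i <= t j.
Proof.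
  intros H i j Hij Hq. destruct (Nat.eq_dec i j); [subst; lra|].
  left; apply (tmono q); auto; lia.
Qed.

Lemma tJ Om g dg Ob u q p t : POLY Om g dg Ob u q p t ->
  forall j, (1 <= j < q)%nat -> t 0%nat < t j < t 0%nat + 1.
Proof.
  intros [_ [Hq [_ [Hm [Hl _]]]]] j Hj. split.
  - apply (tmono q); auto; lia.
  - apply Rle_lt_trans with (t (pred q)); auto. apply (tle q); auto; lia.
Qed.

Lemma tJ' Om g dg Ob u q p t : POLY Om g dg Ob u q p t ->
  forall j, (j < q)%nat -> t 0%nat <= t j < t 0%nat + 1.
Proof.
  intros HP j Hj. destruct j; [lra|].
  assert (X := tJ Om g dg Ob u q p t HP (S j) ltac:(lia)); lra.
Qed.

Lemma p_inj Om g dg Ob u q p t : POLY Om g dg Ob u q p t ->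
  forall i j, (i < q)%nat -> (j < q)%nat -> p i = p j -> i = j.
Proof.
  intros HP i j Hi Hj E. pose proof HP as [HS [_ [Hgp [Hm _]]]].
  rewrite <- (Hgp i Hi), <- (Hgp j Hj) in E.
  apply (g_inj_J Om g dg Ob u (t 0%nat)) in E; auto; try (apply (tJ' Om g dg Ob u q p t HP); auto).
  destruct (Nat.lt_total i j) as [L|[L|L]]; auto.
  - assert (t i < t j) by (apply (tmono q); auto). lra.
  - assert (t j < t i) by (apply (tmono q); auto). lra.
Qed.


Definition MM Ob u (p : nat -> pt) i k := reflect Ob u (p i) = p k.

Lemma psi_M Om g dg Ob u q p t i k : POLY Om g dg Ob u q p t ->
  (i < q)%nat -> (k < q)%nat -> MM Ob u p i k ->
  psi Ob u g (t k) = - psi Ob u g (t i).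
Proof.
  intros HP Hi Hk E. pose proof HP as [[_ [_ [Hu _]]] [_ [Hgp _]]].
  unfold psi. rewrite Hgp, Hgp; auto. rewrite <- E, SS_refl; auto.
Qed.

Lemma phi_M Om g dg Ob u q p t i k : POLY Om g dg Ob u q p t ->
  (i < q)%nat -> (k < q)%nat -> MM Ob u p i k ->
  phi Ob u g (t k) = phi Ob u g (t i).
Proof.
  intros HP Hi Hk E. pose proof HP as [[_ [_ [Hu _]]] [_ [Hgp _]]].
  unfold phi. rewrite Hgp, Hgp; auto. rewrite <- E, HH_refl; auto.
Qed.

Lemma M_sym Om g dg Ob u q p t i k : POLY Om g dg Ob u q p t ->
  MM Ob u p i k -> MM Ob u p k i.
Proof.
  intros HP E. pose proof HP as [[_ [_ [Hu _]]] _]. unfold MM in *.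
  rewrite <- E, refl_refl; auto.
Qed.

Lemma M_nz Om g dg Ob u q p t i k : POLY Om g dg Ob u q p t ->
  (i < q)%nat -> (k < q)%nat -> MM Ob u p i k -> (1 <= i)%nat -> (1 <= k)%nat.
Proof.
  intros HP Hi Hk E H1. destruct k; [|lia]. exfalso.
  pose proof HP as [[_ [_ [Hu _]]] [_ [_ [_ [_ [_ H0]]]]]].
  unfold MM in E. rewrite H0 in E. apply (f_equal (reflect Ob u)) in E.
  rewrite refl_refl, refl_Ob in E; auto. rewrite <- H0 in E.
  apply (p_inj Om g dg Ob u q p t HP) in E; auto; lia.
Qed.

Lemma side_AB Om g dg Ob u q p t ts c i k : POLY Om g dg Ob u q p t ->
  STRUCT g dg Ob u (t 0%nat) ts c ->
  (i < q)%nat -> (k < q)%nat -> MM Ob u p i k -> (1 <= i)%nat -> t i < ts ->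
  (1 <= k)%nat /\ ts < t k.
Proof.
  intros HP HT Hi Hk E H1 Hts.
  assert (Hk1 := M_nz Om g dg Ob u q p t i k HP Hi Hk E H1). split; auto.
  destruct HT as [Hts0 [Pts [_ [uniq [cA _]]]]].
  assert (Ji := tJ Om g dg Ob u q p t HP i ltac:(lia)).
  assert (Jk := tJ Om g dg Ob u q p t HP k ltac:(lia)).
  assert (Pk := psi_M Om g dg Ob u q p t i k HP Hi Hk E).
  assert (ni : psi Ob u g (t i) <> 0) by (apply uniq; lra).
  assert (ii : psi Ob u g (t i) * psi Ob u g (t i) > 0) by (apply Rsqr_pos_lt in ni; unfold Rsqr in ni; lra).
  destruct (Rtotal_order (t k) ts) as [L|[L|L]]; auto; exfalso.
  - assert (psi Ob u g (t i) * psi Ob u g (t k) > 0) by (apply cA; lra). rewrite Pk in H. lra.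
  - rewrite L, Pts in Pk. lra.
Qed.

Lemma side_BA Om g dg Ob u q p t ts c i k : POLY Om g dg Ob u q p t ->
  STRUCT g dg Ob u (t 0%nat) ts c ->
  (i < q)%nat -> (k < q)%nat -> MM Ob u p i k -> (1 <= i)%nat -> ts < t i ->
  (1 <= k)%nat /\ t k < ts.
Proof.
  intros HP HT Hi Hk E H1 Hts.
  assert (Hk1 := M_nz Om g dg Ob u q p t i k HP Hi Hk E H1). split; auto.
  destruct HT as [Hts0 [Pts [_ [uniq [_ [cB _]]]]]].
  assert (Ji := tJ Om g dg Ob u q p t HP i ltac:(lia)).
  assert (Jk := tJ Om g dg Ob u q p t HP k ltac:(lia)).
  assert (Pk := psi_M Om g dg Ob u q p t i k HP Hi Hk E).
  assert (ni : psi Ob u g (t i) <> 0) by (apply uniq; lra).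
  assert (ii : psi Ob u g (t i) * psi Ob u g (t i) > 0) by (apply Rsqr_pos_lt in ni; unfold Rsqr in ni; lra).
  destruct (Rtotal_order (t k) ts) as [L|[L|L]]; auto; exfalso.
  - rewrite L, Pts in Pk. lra.
  - assert (psi Ob u g (t i) * psi Ob u g (t k) > 0) by (apply cB; lra). rewrite Pk in H. lra.
Qed.

Lemma t_lt_idx Om g dg Ob u q p t i j : POLY Om g dg Ob u q p t ->
  (i < q)%nat -> (j < q)%nat -> t i < t j -> (i < j)%nat.
Proof.
  intros HP Hi Hj L. pose proof HP as [_ [_ [_ [Hm _]]]].
  destruct (Nat.lt_ge_cases i j); auto.
  assert (t j <= t i) by (apply (tle q); auto). lra.
Qed.

Lemma claimA Om g dg Ob u q p t ts c : POLY Om g dg Ob u q p t ->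
  STRUCT g dg Ob u (t 0%nat) ts c ->
  forall n i, (i <= n)%nat -> (1 <= i < q)%nat -> t i < ts ->
  forall k, (k < q)%nat -> MM Ob u p i k -> k = (q - i)%nat.
Proof.
  intros HP HT. pose proof HP as [_ [Hq [_ [Hm [_ [Hex _]]]]]].
  pose proof HT as [Hts [_ [_ [_ [_ [_ [_ [mA [mB _]]]]]]]]].
  assert (f_lt : forall a b, (a < b < q)%nat -> t b <= ts -> c * phi Ob u g (t a) < c * phi Ob u g (t b)).
  { intros a b Hab Hb. apply mA; auto. split; [apply (tle q); auto; lia|apply (tmono q); auto; lia]. }
  assert (f_gt : forall a b, (a < b < q)%nat -> ts <= t a -> c * phi Ob u g (t b) < c * phi Ob u g (t a)).
  { intros a b Hab Ha. apply mB; [split; auto; apply (tmono q); auto; lia|].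
    assert (X := tJ Om g dg Ob u q p t HP b ltac:(lia)). lra. }
  induction n as [|n IH]; intros i Hin Hi Hti k Hk E; [lia|].
  destruct (side_AB Om g dg Ob u q p t ts c i k HP HT ltac:(lia) Hk E ltac:(lia) Hti) as [Hk1 Htk].
  assert (Pk := phi_M Om g dg Ob u q p t i k HP ltac:(lia) Hk E).
  assert (U : (k <= q - i)%nat).
  { destruct (Nat.eq_dec i 1) as [->|Hi1]; [lia|].
    destruct (Hex (i - 1)%nat ltac:(lia)) as [k' [Hk' E']].
    assert (tim : t (i - 1)%nat < t i) by (apply (tmono q); auto; lia).
    assert (Hk'v : k' = (q - (i - 1))%nat).
    { apply (IH (i-1)%nat); auto; try lia. lra. }
    assert (Pk' := phi_M Om g dg Ob u q p t (i-1) k' HP ltac:(lia) Hk' E').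
    assert (L1 : c * phi Ob u g (t (i-1)%nat) < c * phi Ob u g (t i)) by (apply f_lt; lia || lra).
    destruct (Nat.lt_ge_cases k k') as [L|L]; [lia|].
    destruct (Nat.eq_dec k k') as [->|Hne].
    - exfalso. rewrite <- Pk, Pk' in L1. lra.
    - exfalso. assert (Hk'B := side_AB Om g dg Ob u q p t ts c (i-1) k' HP HT ltac:(lia) Hk' E' ltac:(lia) ltac:(lra)).
      assert (c * phi Ob u g (t k) < c * phi Ob u g (t k')) by (apply f_gt; lia || lra).
      rewrite Pk, Pk' in H. lra. }
  destruct (Nat.lt_ge_cases k (q - i)) as [L|L]; [|lia]. exfalso.
  set (m := S k).
  assert (Hm1 : (m < q)%nat) by (unfold m; lia).
  assert (tm : ts < t m) by (assert (t k < t m) by (apply (tmono q); auto; unfold m; lia); lra).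
  destruct (Hex m Hm1) as [n' [Hn' E2]].
  destruct (side_BA Om g dg Ob u q p t ts c m n' HP HT Hm1 Hn' E2 ltac:(unfold m; lia) tm) as [Hn1 Htn].
  assert (Pn := phi_M Om g dg Ob u q p t m n' HP Hm1 Hn' E2).
  assert (L2 : c * phi Ob u g (t m) < c * phi Ob u g (t k)) by (apply f_gt; unfold m; lia || lra).
  destruct (Nat.lt_ge_cases n' i) as [L3|L3].
  - assert (Hv : m = (q - n')%nat).
    { apply (IH n'); auto; try lia. apply (M_sym Om g dg Ob u q p t); auto. }
    unfold m in Hv. lia.
  - destruct (Nat.eq_dec n' i) as [->|Hne].
    + rewrite <- Pn, Pk in L2. lra.
    + assert (c * phi Ob u g (t i) < c * phi Ob u g (t n')) by (apply f_lt; lia || lra).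
      rewrite <- Pn, Pk in L2. lra.
Qed.


Lemma claimA' Om g dg Ob u q p t ts c i k : POLY Om g dg Ob u q p t ->
  STRUCT g dg Ob u (t 0%nat) ts c ->
  (1 <= i < q)%nat -> t i < ts -> (k < q)%nat -> MM Ob u p i k -> k = (q - i)%nat.
Proof. intros HP HT Hi Ht Hk E. apply (claimA Om g dg Ob u q p t ts c HP HT i i); auto. Qed.

Lemma axis_fixed Om g dg Ob u q p t ts c i : POLY Om g dg Ob u q p t ->
  STRUCT g dg Ob u (t 0%nat) ts c -> (i < q)%nat -> t i = ts -> MM Ob u p i i.
Proof.
  intros HP HT Hi E. pose proof HP as [[_ [_ [Hu _]]] [_ [Hgp _]]].
  destruct HT as [_ [Pts _]]. unfold psi in Pts. rewrite <- E, Hgp in Pts; auto.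
  unfold MM. apply (coord_eq Ob u); auto.
  - rewrite HH_refl; auto.
  - rewrite SS_refl, Pts; auto; ring.
Qed.

Lemma mirror_all Om g dg Ob u q p t ts c : POLY Om g dg Ob u q p t ->
  STRUCT g dg Ob u (t 0%nat) ts c ->
  forall i, (i < q)%nat -> MM Ob u p i ((q - i) mod q).
Proof.
  intros HP HT i Hi. pose proof HP as [[_ [_ [Hu _]]] [Hq [Hgp [Hm [_ [Hex H0]]]]]].
  destruct i as [|i].
  - rewrite Nat.sub_0_r, Nat.Div0.mod_same. unfold MM; rewrite H0, refl_Ob; auto.
  - rewrite Nat.mod_small by lia. set (j := S i) in *.
    assert (Jj := tJ Om g dg Ob u q p t HP j ltac:(unfold j; lia)).
    destruct (Rtotal_order (t j) ts) as [L|[L|L]].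
    + destruct (Hex j Hi) as [k [Hk E]].
      rewrite <- (claimA' Om g dg Ob u q p t ts c j k HP HT ltac:(unfold j; lia) L Hk E); exact E.
    + assert (F := axis_fixed Om g dg Ob u q p t ts c j HP HT Hi L).
      replace (q - j)%nat with j; auto.
      pose proof HT as [Hts _].
      assert (up : (j + 1 < q)%nat -> (q <= 2 * j)%nat).
      { intros H1. destruct (Hex (j+1)%nat H1) as [n [Hn E]].
        assert (tj1 : ts < t (j+1)%nat) by (rewrite <- L; apply (tmono q); auto; lia).
        destruct (side_BA Om g dg Ob u q p t ts c (j+1) n HP HT H1 Hn E ltac:(lia) tj1) as [Hn1 Htn].
        assert (nv := claimA' Om g dg Ob u q p t ts c n (j+1) HP HT ltac:(lia) Htn H1
                  (M_sym Om g dg Ob u q p t _ _ HP E)).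
        assert (n < j)%nat by (apply (t_lt_idx Om g dg Ob u q p t); auto; lra). lia. }
      assert (lo : (2 <= j)%nat -> (2 * j <= q)%nat).
      { intros H1. destruct (Hex (j-1)%nat ltac:(lia)) as [k [Hk E]].
        assert (tj1 : t (j-1)%nat < ts) by (rewrite <- L; apply (tmono q); auto; lia).
        assert (kv := claimA' Om g dg Ob u q p t ts c (j-1) k HP HT ltac:(lia) tj1 Hk E).
        destruct (side_AB Om g dg Ob u q p t ts c (j-1) k HP HT ltac:(lia) Hk E ltac:(lia) tj1) as [Hk1 Htk].
        assert (j < k)%nat by (apply (t_lt_idx Om g dg Ob u q p t); auto; lra). lia. }
      destruct (Nat.lt_ge_cases (j+1) q); destruct (Nat.lt_ge_cases j 2).
      all: try (specialize (up ltac:(lia))); try (specialize (lo ltac:(lia))).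
      all: unfold j in *; try lia.
    + destruct (Hex j Hi) as [k [Hk E]].
      destruct (side_BA Om g dg Ob u q p t ts c j k HP HT Hi Hk E ltac:(unfold j; lia) L) as [Hk1 Htk].
      assert (kv := claimA' Om g dg Ob u q p t ts c k j HP HT ltac:(lia) Htk Hi
                  (M_sym Om g dg Ob u q p t _ _ HP E)).
      replace (q - S i)%nat with k by (unfold j in *; lia). exact E.
Qed.


Lemma mod_lt2 x q : (q <= x < 2 * q)%nat -> (x mod q = x - q)%nat.
Proof.
  intros H. replace x with ((x - q) + 1 * q)%nat at 1 by lia.
  rewrite Nat.Div0.mod_add. apply Nat.mod_small. lia.
Qed.

Definition pm (q j : nat) := ((j + q - 1) mod q)%nat.
Definition sc (q j : nat) := ((S j) mod q)%nat.

Lemma pm_val q j : (1 <= q)%nat -> (j < q)%nat -> pm q j = (if Nat.eq_dec j 0 then q - 1 else j - 1)%nat.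
Proof.
  intros Hq Hj. unfold pm. destruct (Nat.eq_dec j 0).
  - subst. apply Nat.mod_small. lia.
  - rewrite mod_lt2 by lia; lia.
Qed.

Lemma sc_val q j : (1 <= q)%nat -> (j < q)%nat -> sc q j = (if Nat.eq_dec (S j) q then 0 else S j)%nat.
Proof.
  intros Hq Hj. unfold sc. destruct (Nat.eq_dec (S j) q).
  - rewrite e. apply Nat.Div0.mod_same.
  - apply Nat.mod_small. lia.
Qed.

Lemma sc_lt q j : (1 <= q)%nat -> (j < q)%nat -> (sc q j < q)%nat.
Proof. intros. rewrite sc_val; auto. destruct (Nat.eq_dec (S j) q); lia. Qed.
Lemma pm_lt q j : (1 <= q)%nat -> (j < q)%nat -> (pm q j < q)%nat.
Proof. intros. rewrite pm_val; auto. destruct (Nat.eq_dec j 0); lia. Qed.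

Lemma sc_pm q j : (1 <= q)%nat -> (j < q)%nat -> sc q (pm q j) = j.
Proof.
  intros Hq Hj. rewrite sc_val, pm_val; auto; [|apply pm_lt; auto].
  destruct (Nat.eq_dec j 0); destruct (Nat.eq_dec _ q); lia.
Qed.

Lemma sc_inv q i j : (1 <= q)%nat -> (i < q)%nat -> (j < q)%nat -> sc q i = j -> i = pm q j.
Proof.
  intros Hq Hi Hj E. rewrite sc_val in E; auto. rewrite pm_val; auto.
  destruct (Nat.eq_dec (S i) q); destruct (Nat.eq_dec j 0); lia.
Qed.

Lemma sc_neq q j : (2 <= q)%nat -> (j < q)%nat -> sc q j <> j.
Proof. intros. rewrite sc_val; [|lia|auto]. destruct (Nat.eq_dec (S j) q); lia. Qed.
Lemma pm_neq q j : (2 <= q)%nat -> (j < q)%nat -> pm q j <> j.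
Proof. intros. rewrite pm_val; [|lia|auto]. destruct (Nat.eq_dec j 0); lia. Qed.

Definition upd (p : nat -> pt) j x : nat -> pt := fun i => if Nat.eq_dec i j then x else p i.

Lemma sum_ext f h n : (forall i, (i <= n)%nat -> f i = h i) -> sum_f_R0 f n = sum_f_R0 h n.
Proof.
  induction n; intros H; simpl; [apply H; lia|]. rewrite IHn, H; auto.
Qed.

Lemma sum_two f n a b : (a <= n)%nat -> (b <= n)%nat -> a <> b ->
  (forall i, (i <= n)%nat -> i <> a -> i <> b -> f i = 0) ->
  sum_f_R0 f n = f a + f b.
Proof.
  revert a b. induction n; intros a b Ha Hb Hab H; [lia|].
  simpl. destruct (Nat.eq_dec a (S n)); destruct (Nat.eq_dec b (S n)); try lia.
  - subst a. assert (sum_f_R0 f n = f b).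
    { clear IHn. assert (forall m, (b <= m <= n)%nat -> sum_f_R0 f m = f b).
      { intros m Hm. induction m.
        - assert (b = 0%nat) by lia. subst; auto.
        - destruct (Nat.eq_dec b (S m)).
          + subst. simpl. rewrite (sum_ext f (fun _ => 0)).
            * rewrite sum_cte. ring_simplify. auto.
            * intros i Hi. apply H; lia.
          + simpl. rewrite IHm by lia. rewrite (H (S m)); [ring|lia|lia|lia]. }
      apply H0; lia. }
    rewrite H0; ring.
  - subst b. assert (sum_f_R0 f n = f a).
    { assert (forall m, (a <= m <= n)%nat -> sum_f_R0 f m = f a).
      { intros m Hm. induction m.
        - assert (a = 0%nat) by lia. subst; auto.
        - destruct (Nat.eq_dec a (S m)).
          + subst. simpl. rewrite (sum_ext f (fun _ => 0)).
            * rewrite sum_cte. ring_simplify. auto.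
            * intros i Hi. apply H; lia.
          + simpl. rewrite IHm by lia. rewrite (H (S m)); [ring|lia|lia|lia]. }
      apply H0; lia. }
    rewrite H0; ring.
  - rewrite (IHn a b); try lia.
    + rewrite (H (S n)); try lia. ring.
    + intros; apply H; lia.
Qed.

Lemma sum_plus' f h n : sum_f_R0 (fun i => f i + h i) n = sum_f_R0 f n + sum_f_R0 h n.
Proof. induction n; simpl; [ring|rewrite IHn; ring]. Qed.

Lemma area_upd q p j x : (2 <= q)%nat -> (j < q)%nat ->
  area q (upd p j x) = area q p + / 2 * cross (psub x (p j)) (psub (p (sc q j)) (p (pm q j))).
Proof.
  intros Hq Hj. unfold area.
  set (c := fun j0 => cross (p j0) (p (S j0 mod q)%nat)).
  set (c' := fun j0 => cross (upd p j x j0) (upd p j x (S j0 mod q)%nat)).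
  assert (E : sum_f_R0 c' (pred q) = sum_f_R0 (fun i => c i + (c' i - c i)) (pred q)).
  { apply sum_ext; intros; ring. }
  rewrite E, sum_plus'.
  assert (Hpm := pm_lt q j ltac:(lia) Hj). assert (Hsc := sc_lt q j ltac:(lia) Hj).
  rewrite (sum_two (fun i => c' i - c i) _ j (pm q j)); try lia.
  - unfold c, c', upd. change ((S j) mod q)%nat with (sc q j).
    change ((S (pm q j)) mod q)%nat with (sc q (pm q j)). rewrite (sc_pm q j) by lia.
    destruct (Nat.eq_dec j j); [|lia].
    destruct (Nat.eq_dec (sc q j) j) as [E1|_]; [exfalso; apply (sc_neq q j); auto|].
    destruct (Nat.eq_dec (pm q j) j) as [E1|_]; [exfalso; apply (pm_neq q j); auto|].
    destruct (Nat.eq_dec j j); [|lia].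
    destruct x, (p j), (p (sc q j)), (p (pm q j)); unfold cross, psub; simpl; ring.
  - apply not_eq_sym, pm_neq; auto.
  - intros i Hi H1 H2. cbv beta. unfold c, c', upd. change ((S i) mod q)%nat with (sc q i).
    destruct (Nat.eq_dec i j); [lia|].
    destruct (Nat.eq_dec (sc q i) j) as [E1|E1]; [|ring].
    exfalso. apply H2, sc_inv; auto; lia.
Qed.


Definition tup (t : nat -> R) j v : nat -> R := fun i => if Nat.eq_dec i j then v else t i.

Definition tnext q (t : nat -> R) i := if Nat.eq_dec (S i) q then t 0%nat + 1 else t (S i).

Lemma valid_pair q (t : nat -> R) ts lo hi slo shi :
  (2 <= q)%nat -> (forall j, (S j < q)%nat -> t j < t (S j)) -> t (pred q) < t 0%nat + 1 ->
  (1 <= lo)%nat -> (lo < hi)%nat -> (hi < q)%nat ->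
  t (pred lo) < slo -> slo < t (S lo) -> slo < ts ->
  t (pred hi) < shi -> ts < shi -> shi < tnext q t hi ->
  let t' := tup (tup t lo slo) hi shi in
  (forall j, (S j < q)%nat -> t' j < t' (S j)) /\ t' (pred q) < t' 0%nat + 1.
Proof.
  intros Hq Hm Hl H1 H2 H3 A1 A2 A3 B1 B2 B3 t'. unfold t', tup.
  unfold tnext in B3.
  split.
  - intros j Hj.
    destruct (Nat.eq_dec j hi); destruct (Nat.eq_dec j lo); destruct (Nat.eq_dec (S j) hi);
      destruct (Nat.eq_dec (S j) lo); try lia; subst.
    + destruct (Nat.eq_dec (S hi) q); [lia|auto].
    + lra.
    + auto.
    + replace (pred (S j)) with j in A1 by lia. auto.
    + replace (pred (S j)) with j in B1 by lia. auto.
    + auto.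
  - destruct (Nat.eq_dec (pred q) hi); destruct (Nat.eq_dec (pred q) lo);
    destruct (Nat.eq_dec 0 hi); destruct (Nat.eq_dec 0 lo); try lia.
    + destruct (Nat.eq_dec (S hi) q); [lra|lia].
    + auto.
Qed.

Lemma perturbed_in_Pq Om g dg Ob u q p t j k s s' : POLY Om g dg Ob u q p t ->
  (1 <= j < q)%nat -> (1 <= k < q)%nat -> j <> k -> MM Ob u p j k ->
  reflect Ob u (g s) = g s' ->
  let t' := tup (tup t j s) k s' in
  (forall i, (S i < q)%nat -> t' i < t' (S i)) -> t' (pred q) < t' 0%nat + 1 ->
  in_Pq Om g Ob u q (upd (upd p j (g s)) k (g s')).
Proof.
  intros HP Hj Hk Hjk E Es t' Hinc Hlast.
  pose proof HP as [[_ [_ [Hu _]]] [Hq [Hgp [Hm [_ [Hex H0]]]]]].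
  split; [|split].
  - exists t'. split; [|split; auto].
    intros i Hi. unfold t', tup, upd.
    destruct (Nat.eq_dec i k); destruct (Nat.eq_dec i j); auto; lia.
  - intros i Hi. unfold upd.
    destruct (Nat.eq_dec i k) as [->|nk]; [|destruct (Nat.eq_dec i j) as [->|nj]].
    + exists j. split; [lia|]. destruct (Nat.eq_dec j k); [lia|]. destruct (Nat.eq_dec j j); [|lia].
      rewrite <- Es, refl_refl; auto.
    + exists k. split; [lia|]. destruct (Nat.eq_dec k k); [auto|lia].
    + destruct (Hex i Hi) as [m [Hmq Em]]. exists m. split; auto.
      destruct (Nat.eq_dec m k) as [->|mk].
      * exfalso. apply nj. apply (p_inj Om g dg Ob u q p t HP); auto; try lia.
        rewrite <- (refl_refl Ob u (p i)), Em, <- E, refl_refl; auto.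
      * destruct (Nat.eq_dec m j) as [->|mj]; auto.
        exfalso. apply nk. apply (p_inj Om g dg Ob u q p t HP); auto; try lia.
        rewrite <- (refl_refl Ob u (p i)), Em, E; auto.
  - unfold upd. destruct (Nat.eq_dec 0 k); destruct (Nat.eq_dec 0 j); try lia. auto.
Qed.


Lemma refl_sub Ob u a b : u <> (0,0) ->
  psub (reflect Ob u a) (reflect Ob u b) = Lr u (psub a b).
Proof.
  intros Hu; pose proof (uu_pos u Hu).
  destruct u as [u1 u2], a as [a1 a2], b as [b1 b2], Ob as [o1 o2];
  unfold Lr, reflect, dot, psub, padd, pscal in *; simpl in *. f_equal; field; lra.
Qed.

Lemma cross_Lr u v w : u <> (0,0) -> cross (Lr u v) (Lr u w) = - cross v w.
Proof.
  intros Hu; pose proof (uu_pos u Hu).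
  destruct u as [u1 u2], v as [a1 a2], w as [b1 b2];
  unfold Lr, cross, dot, psub, pscal in *; simpl in *. field; lra.
Qed.

Definition Gf q (p : nat -> pt) (g : R -> pt) Ob u j k (x : pt) : R :=
  area q p + / 2 * cross (psub x (p j)) (psub (p (sc q j)) (p (pm q j)))
  + / 2 * cross (psub (reflect Ob u x) (p k)) (psub (upd p j x (sc q k)) (upd p j x (pm q k))).

Lemma area_G q p Ob u j k x : (2 <= q)%nat -> (j < q)%nat -> (k < q)%nat -> j <> k ->
  area q (upd (upd p j x) k (reflect Ob u x)) = Gf q p (fun _ => x) Ob u j k x.
Proof.
  intros Hq Hj Hk Hjk. rewrite area_upd, area_upd; auto. unfold Gf.
  replace (upd p j x k) with (p k); auto. unfold upd. destruct (Nat.eq_dec k j); [lia|auto].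
Qed.

Lemma pd_upd Om g dg p j i t0 : ccw_C1_boundary_param Om g dg ->
  pd (fun s => upd p j (g s) i) t0 (if Nat.eq_dec i j then dg t0 else (0,0)).
Proof.
  intros Hg. unfold upd. destruct (Nat.eq_dec i j).
  - apply (pd_g Om g dg t0 Hg).
  - apply pd_const.
Qed.

Lemma upd_same p j x : p j = x -> forall i, upd p j x i = p i.
Proof. intros E i. unfold upd. destruct (Nat.eq_dec i j); subst; auto. Qed.

Lemma G_deriv Om g dg Ob u q p j k t0 : ccw_C1_boundary_param Om g dg -> u <> (0,0) ->
  g t0 = p j -> reflect Ob u (p j) = p k ->
  derivable_pt_lim (fun s => Gf q p g Ob u j k (g s)) t0
    (/2 * cross (dg t0) (psub (p (sc q j)) (p (pm q j))) +
     /2 * cross (Lr u (dg t0)) (psub (p (sc q k)) (p (pm q k)))).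
Proof.
  intros Hg Hu E1 E2. unfold Gf. eapply dpl_eq.
  - apply derivable_pt_lim_plus; [apply derivable_pt_lim_plus; [apply derivable_pt_lim_const|]|].
    + apply derivable_pt_lim_mult; [apply derivable_pt_lim_const|].
      apply cross_d; [apply pd_sub; [apply (pd_g Om g dg t0 Hg)|apply pd_const]|apply pd_const].
    + apply derivable_pt_lim_mult; [apply derivable_pt_lim_const|].
      apply cross_d.
      * apply pd_sub; [apply pd_refl, (pd_g Om g dg t0 Hg)|apply pd_const].
      * apply pd_sub; apply (pd_upd Om g dg); auto.
  - unfold fct_cte. rewrite E1, E2, !(upd_same p j (p j) eq_refl).
    destruct (dg t0), (p j), (p k), (p (sc q j)), (p (pm q j)), (p (sc q k)), (p (pm q k)),
      (if Nat.eq_dec (sc q k) j then dg t0 else (0,0)), (if Nat.eq_dec (pm q k) j then dg t0 else (0,0)).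
    unfold Lr, cross, psub, dot, pscal; simpl. ring.
Qed.


Lemma cont_delta f x eps : continuity_pt f x -> 0 < eps ->
  exists d, 0 < d /\ forall y, Rabs (y - x) < d -> Rabs (f y - f x) < eps.
Proof.
  intros H He. destruct (H eps He) as [d [Hd Hy]]. exists d; split; auto.
  intros y Hy'. destruct (Req_dec y x) as [->|ne].
  - rewrite Rminus_eq_0, Rabs_R0; auto.
  - apply Hy. split; [split; [exact I|auto]|]. exact Hy'.
Qed.

Lemma bracket A B T v : (A - T) * (B - T) < 0 -> Rabs (v - T) < Rabs (A - T) ->
  Rabs (v - T) < Rabs (B - T) -> (A - v) * (B - v) < 0.
Proof.
  intros H1 H2 H3. unfold Rabs in *.
  destruct (Rcase_abs (v - T)); destruct (Rcase_abs (A - T)); destruct (Rcase_abs (B - T)); nra.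
Qed.

Lemma local_max_gen Om g dg Ob u q p t ts c j k a1 b1 a2 b2 :
  POLY Om g dg Ob u q p t -> STRUCT g dg Ob u (t 0%nat) ts c ->
  (forall p', in_Pq Om g Ob u q p' -> area q p' <= area q p) ->
  (1 <= j < q)%nat -> (1 <= k < q)%nat -> j <> k -> MM Ob u p j k ->
  a1 < t j < b1 -> a2 < b2 ->
  (forall s s', a1 < s < b1 -> a2 < s' < b2 ->
     let t' := tup (tup t j s) k s' in
     (forall i, (S i < q)%nat -> t' i < t' (S i)) /\ t' (pred q) < t' 0%nat + 1) ->
  (forall s s', a1 < s < b1 -> a2 < s' < b2 -> psi Ob u g s * psi Ob u g s' < 0) ->
  (c * phi Ob u g a2 - c * phi Ob u g (t k)) * (c * phi Ob u g b2 - c * phi Ob u g (t k)) < 0 ->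
  exists d, 0 < d /\ forall s, t j - d < s < t j + d ->
    Gf q p g Ob u j k (g s) <= area q p.
Proof.
  intros HP HT Hmax Hj Hk Hjk E Hab1 Hab2 Hval Hsd Hbr.
  pose proof HP as [HS [Hq [Hgp [Hm [_ [Hex H0]]]]]].
  pose proof HS as [HOm [Hg [Hu [Hsym _]]]].
  pose proof HT as [_ [_ [Hc _]]].
  set (T := c * phi Ob u g (t k)) in *.
  set (A := c * phi Ob u g a2) in *. set (B := c * phi Ob u g b2) in *.
  assert (nA : A - T <> 0) by (intro Z; rewrite Z in Hbr; lra).
  assert (nB : B - T <> 0) by (intro Z; rewrite Z in Hbr; lra).
  set (e := Rmin (Rabs (A - T)) (Rabs (B - T))).
  assert (He : 0 < e) by (apply Rmin_pos; apply Rabs_pos_lt; auto).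
  assert (Hcont : continuity_pt (fun s => c * HH Ob u (g s) - 0) (t j)) by (apply (phh_cont Om g dg Ob u c 0 Hg)).
  destruct (cont_delta _ _ e Hcont He) as [d0 [Hd0 Hd]].
  assert (PT : phi Ob u g (t j) = phi Ob u g (t k)) by (symmetry; apply (phi_M Om g dg Ob u q p t j k HP); auto; lia).
  exists (Rmin d0 (Rmin (t j - a1) (b1 - t j))). split.
  { apply Rmin_pos; auto. apply Rmin_pos; lra. }
  intros s Hs.
  assert (m1 := Rmin_l d0 (Rmin (t j - a1) (b1 - t j))).
  assert (m2 := Rmin_r d0 (Rmin (t j - a1) (b1 - t j))).
  assert (m3 := Rmin_l (t j - a1) (b1 - t j)). assert (m4 := Rmin_r (t j - a1) (b1 - t j)).
  assert (Hs1 : a1 < s < b1) by lra.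
  assert (Hv : Rabs (c * phi Ob u g s - T) < e).
  { unfold T. rewrite <- PT. unfold phi.
    replace (c * HH Ob u (g s) - c * HH Ob u (g (t j))) with
      ((c * HH Ob u (g s) - 0) - (c * HH Ob u (g (t j)) - 0)) by ring.
    apply Hd. apply Rabs_def1; lra. }
  assert (Hbr2 : (A - c * phi Ob u g s) * (B - c * phi Ob u g s) < 0).
  { apply (bracket A B T); auto.
    - apply Rlt_le_trans with e; auto. apply Rmin_l.
    - apply Rlt_le_trans with e; auto. apply Rmin_r. }
  destruct (IVT_strict (fun x => c * HH Ob u (g x) - c * phi Ob u g s) a2 b2) as [s' [Hs' Fs']]; auto.
  { apply (phh_cont Om g dg Ob u c _ Hg). }
  assert (Hphi : HH Ob u (g s') = HH Ob u (g s)).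
  { unfold phi in Fs'. apply (Rmult_eq_reg_l c); auto. lra. }
  assert (Eg : reflect Ob u (g s) = g s').
  { apply (same_side Om Ob u); auto.
    - apply boundary_refl; auto. eapply g_boundary; eauto.
    - eapply g_boundary; eauto.
    - rewrite HH_refl; auto.
    - rewrite SS_refl; auto. assert (X := Hsd s s' Hs1 Hs'). unfold psi in X. nra. }
  destruct (Hval s s' Hs1 Hs') as [V1 V2].
  assert (IP := perturbed_in_Pq Om g dg Ob u q p t j k s s' HP Hj Hk Hjk E Eg V1 V2).
  apply Hmax in IP. rewrite <- Eg, area_G in IP; auto; try lia.
Qed.


Lemma idx1 q j : (2 <= q)%nat -> (1 <= j < q)%nat -> ((q - pm q j) mod q = sc q (q - j))%nat.
Proof.
  intros Hq Hj. rewrite pm_val, sc_val by lia.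
  destruct (Nat.eq_dec j 0); [lia|]. destruct (Nat.eq_dec (S (q - j)) q).
  - replace (q - (j - 1))%nat with q by lia. apply Nat.Div0.mod_same.
  - rewrite Nat.mod_small; lia.
Qed.

Lemma idx2 q j : (2 <= q)%nat -> (1 <= j < q)%nat -> ((q - sc q j) mod q = pm q (q - j))%nat.
Proof.
  intros Hq Hj. rewrite pm_val, sc_val by lia.
  destruct (Nat.eq_dec (q - j) 0); [lia|]. destruct (Nat.eq_dec (S j) q).
  - rewrite Nat.sub_0_r, Nat.Div0.mod_same. lia.
  - rewrite Nat.mod_small; lia.
Qed.

Lemma tup_comm (t : nat -> R) j k s s' i : j <> k ->
  tup (tup t j s) k s' i = tup (tup t k s') j s i.
Proof. intros H. unfold tup. destruct (Nat.eq_dec i k); destruct (Nat.eq_dec i j); subst; auto; lia. Qed.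

Lemma tnext_le Om g dg Ob u q p t i : POLY Om g dg Ob u q p t -> (i < q)%nat ->
  t i < tnext q t i /\ tnext q t i <= t 0%nat + 1.
Proof.
  intros HP Hi. pose proof HP as [_ [Hq [_ [Hm [Hl _]]]]]. unfold tnext.
  destruct (Nat.eq_dec (S i) q).
  - assert (t i <= t (pred q)) by (apply (tle q); auto; lia). lra.
  - split; [apply Hm; lia|]. assert (X := tJ Om g dg Ob u q p t HP (S i) ltac:(lia)). lra.
Qed.

Lemma offaxis Om g dg Ob u q p t ts c j : POLY Om g dg Ob u q p t ->
  STRUCT g dg Ob u (t 0%nat) ts c ->
  (forall p', in_Pq Om g Ob u q p' -> area q p' <= area q p) ->
  (1 <= j < q)%nat -> t j <> ts ->
  cross (psub (p (sc q j)) (p (pm q j))) (dg (t j)) = 0.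
Proof.
  intros HP HT Hmax Hj Htj.
  pose proof HP as [HS [Hq [Hgp [Hm [Hl [Hex H0]]]]]].
  pose proof HS as [HOm [Hg [Hu [Hsym _]]]].
  pose proof HT as [Hts [Pts [Hc [uniq [cA [cB [cAB [mA [mB _]]]]]]]]].
  set (k := (q - j)%nat).
  assert (Ek : MM Ob u p j k).
  { assert (X := mirror_all Om g dg Ob u q p t ts c HP HT j ltac:(lia)).
    rewrite Nat.mod_small in X by lia. exact X. }
  assert (Jj := tJ Om g dg Ob u q p t HP j ltac:(lia)).
  assert (Hjk : j <> k).
  { intro Z. rewrite <- Z in Ek. apply (uniq (t j)); auto.
    assert (X := psi_M Om g dg Ob u q p t j j HP ltac:(lia) ltac:(lia) Ek). lra. }
  assert (E1 : MM Ob u p (pm q j) (sc q k)).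
  { unfold k; rewrite <- idx1 by lia. apply (mirror_all Om g dg Ob u q p t ts c HP HT). apply pm_lt; lia. }
  assert (E2 : MM Ob u p (sc q j) (pm q k)).
  { unfold k; rewrite <- idx2 by lia. apply (mirror_all Om g dg Ob u q p t ts c HP HT). apply sc_lt; lia. }
  assert (LM : exists d, 0 < d /\ forall s, t j - d < s < t j + d ->
    Gf q p g Ob u j k (g s) <= area q p).
  { destruct (Rlt_dec (t j) ts) as [LA|LB].
    - destruct (side_AB Om g dg Ob u q p t ts c j k HP HT ltac:(lia) ltac:(unfold k; lia) Ek ltac:(lia) LA) as [Hk1 Htk].
      assert (jk : (j < k)%nat) by (apply (t_lt_idx Om g dg Ob u q p t); auto; first [unfold k; lia | lia | lra]).
      assert (t1 : t (pred j) < t j) by (apply (tmono q); auto; lia).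
      assert (t2 : t j < t (S j)) by (apply Hm; unfold k in *; lia).
      assert (t3 : t (pred k) < t k) by (apply (tmono q); auto; unfold k; lia).
      assert (t4 := tnext_le Om g dg Ob u q p t k HP ltac:(unfold k; lia)).
      assert (t5 : t 0%nat <= t (pred j)) by (apply (tle q); auto; lia).
      apply (local_max_gen Om g dg Ob u q p t ts c j k (t (pred j)) (Rmin (t (S j)) ts)
               (Rmax (t (pred k)) ts) (tnext q t k)); auto; try (unfold k; lia).
      + split; auto. apply Rmin_glb_lt; auto.
      + apply Rle_lt_trans with (t k); [apply Rmax_lub; lra|lra].
      + intros s s' Hs Hs'. assert (r1 := Rmin_l (t (S j)) ts). assert (r2 := Rmin_r (t (S j)) ts).
        assert (r3 := Rmax_l (t (pred k)) ts). assert (r4 := Rmax_r (t (pred k)) ts).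
        apply (valid_pair q t ts j k s s'); auto; try lra; unfold k in *; lia.
      + intros s s' Hs Hs'. assert (r2 := Rmin_r (t (S j)) ts). assert (r4 := Rmax_r (t (pred k)) ts).
        apply cAB; lra.
      + assert (r3 := Rmax_l (t (pred k)) ts). assert (r4 := Rmax_r (t (pred k)) ts).
        assert (A : c * phi Ob u g (t k) < c * phi Ob u g (Rmax (t (pred k)) ts)).
        { apply mB; [split; [lra|apply Rmax_lub_lt; lra]|lra]. }
        assert (B : c * phi Ob u g (tnext q t k) < c * phi Ob u g (t k)) by (apply mB; lra).
        nra.
    - assert (LB' : ts < t j) by lra.
      destruct (side_BA Om g dg Ob u q p t ts c j k HP HT ltac:(lia) ltac:(unfold k; lia) Ek ltac:(lia) LB') as [Hk1 Htk].
      assert (jk : (k < j)%nat) by (apply (t_lt_idx Om g dg Ob u q p t); auto; first [unfold k; lia | lia | lra]).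
      assert (Jk := tJ Om g dg Ob u q p t HP k ltac:(unfold k; lia)).
      assert (t1 : t (pred k) < t k) by (apply (tmono q); auto; unfold k; lia).
      assert (t2 : t k < t (S k)) by (apply Hm; lia).
      assert (t3 : t (pred j) < t j) by (apply (tmono q); auto; lia).
      assert (t4 := tnext_le Om g dg Ob u q p t j HP ltac:(lia)).
      assert (t5 : t 0%nat <= t (pred k)) by (apply (tle q); auto; lia).
      apply (local_max_gen Om g dg Ob u q p t ts c j k (Rmax (t (pred j)) ts) (tnext q t j)
               (t (pred k)) (Rmin (t (S k)) ts)); auto; try (unfold k; lia).
      + split; [|lra]. apply Rmax_lub_lt; auto.
      + apply Rlt_le_trans with (t k); [lra|apply Rmin_glb; lra].
      + intros s s' Hs Hs'. assert (r1 := Rmin_l (t (S k)) ts). assert (r2 := Rmin_r (t (S k)) ts).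
        assert (r3 := Rmax_l (t (pred j)) ts). assert (r4 := Rmax_r (t (pred j)) ts).
        destruct (valid_pair q t ts k j s' s) as [V1 V2]; auto; try lra; try (unfold k in *; lia).
        cbv zeta. split.
        * intros i Hi. rewrite !(tup_comm t j k s s') by auto. apply V1; auto.
        * rewrite !(tup_comm t j k s s') by auto. auto.
      + intros s s' Hs Hs'. assert (r2 := Rmin_r (t (S k)) ts). assert (r4 := Rmax_r (t (pred j)) ts).
        rewrite Rmult_comm. apply cAB; lra.
      + assert (r1 := Rmin_l (t (S k)) ts). assert (r2 := Rmin_r (t (S k)) ts).
        assert (A : c * phi Ob u g (t (pred k)) < c * phi Ob u g (t k)) by (apply mA; lra).
        assert (B : c * phi Ob u g (t k) < c * phi Ob u g (Rmin (t (S k)) ts)).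
        { apply mA; [split; [lra|apply Rmin_glb_lt; lra]|apply Rmin_r]. }
        nra. }
  destruct LM as [d [Hd LM]].
  assert (D := G_deriv Om g dg Ob u q p j k (t j) Hg Hu (Hgp j ltac:(lia)) Ek).
  assert (Z := dpl_max _ (t j - d) (t j + d) (t j) _ D ltac:(lra)).
  assert (GT : Gf q p g Ob u j k (g (t j)) = area q p).
  { unfold Gf. rewrite (Hgp j ltac:(lia)). unfold MM in Ek. rewrite Ek.
    destruct (p j), (p k), (psub _ _), (psub (upd p j _ _) _). unfold cross, psub; simpl; ring. }
  assert (Z2 := Z ltac:(intros x Hx; cbv beta; rewrite GT; apply LM; lra)). clear Z. rename Z2 into Z.
  unfold MM in E1, E2. rewrite <- E1, <- E2, refl_sub, cross_Lr in Z by auto.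
  destruct (dg (t j)), (p (sc q j)), (p (pm q j)). unfold cross, psub in *; simpl in *. lra.
Qed.




Lemma perp_cross u a b : u <> (0,0) -> dot a u = 0 -> dot b u = 0 -> cross a b = 0.
Proof.
  intros Hu Ha Hb. pose proof (uu_pos u Hu).
  destruct u as [u1 u2], a as [a1 a2], b as [b1 b2]; unfold cross, dot in *; simpl in *.
  assert (X1 : u1 * (a1 * b2 - a2 * b1) = 0).
  { replace (u1 * (a1 * b2 - a2 * b1)) with (b2 * (a1 * u1 + a2 * u2) - a2 * (b1 * u1 + b2 * u2)) by ring.
    rewrite Ha, Hb; ring. }
  assert (X2 : u2 * (a1 * b2 - a2 * b1) = 0).
  { replace (u2 * (a1 * b2 - a2 * b1)) with (- b1 * (a1 * u1 + a2 * u2) + a1 * (b1 * u1 + b2 * u2)) by ring.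
    rewrite Ha, Hb; ring. }
  apply Rmult_integral in X1; apply Rmult_integral in X2.
  destruct X1; auto; destruct X2; auto. subst. lra.
Qed.

Lemma axis_cross Ob u x d : u <> (0,0) -> dot d u = 0 ->
  cross (psub x (reflect Ob u x)) d = 0.
Proof.
  intros Hu Hd. apply (perp_cross u); auto.
  pose proof (uu_pos u Hu).
  destruct u as [u1 u2], x as [x1 x2], Ob as [o1 o2];
  unfold reflect, dot, psub, padd, pscal in *; simpl in *. field. lra.
Qed.

Lemma sc_pm_eq q j : (2 <= q)%nat -> (j < q)%nat -> sc q j = pm q j -> q = 2%nat.
Proof.
  intros Hq Hj E. rewrite sc_val, pm_val in E by lia.
  destruct (Nat.eq_dec (S j) q); destruct (Nat.eq_dec j 0); lia.
Qed.

Theorem proposition3p3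
  (Om : pt -> Prop) (g dg : R -> pt) (Ob u : pt) (q : nat)
  (HOm : strictly_convex_domain Om)
  (Hg : ccw_C1_boundary_param Om g dg)
  (Hu : u <> (0, 0))
  (Hsym : axially_symmetric Om Ob u)
  (HO : in_boundary Om Ob)
  (q_ge2 : (2 <= q)%nat)
  (p : nat -> pt)
  (Hp : in_Pq Om g Ob u q p)
  (Hmax : forall p', in_Pq Om g Ob u q p' -> area q p' <= area q p) :
  periodic_orbit g dg q p.
Proof.
  destruct Hp as [[t [Hgp [Hm Hl]]] [Hex H0]].
  assert (HP : POLY Om g dg Ob u q p t).
  { split; [split; [exact HOm|split; [exact Hg|split; [exact Hu|split; [exact Hsym|split; [exact HO|]]]]]|].
    - rewrite Hgp by lia. auto.
    - split; [exact q_ge2|split; [exact Hgp|split; [exact Hm|split; [exact Hl|split; [exact Hex|exact H0]]]]]. }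
  assert (HS : SETUP Om g dg Ob u (t 0%nat)) by apply HP.
  destruct (struct_full Om g dg Ob u (t 0%nat) HS) as [ts [c HT]].
  pose proof HT as [Hts [Pts [Hc [uniq [_ [_ [_ [_ [_ [D0 Dts]]]]]]]]]].
  assert (axis_dot : forall i, (i < q)%nat -> psi Ob u g (t i) = 0 -> dot (dg (t i)) u = 0).
  { intros i Hi Pi. destruct i; auto.
    assert (J := tJ Om g dg Ob u q p t HP (S i) ltac:(lia)).
    destruct (Req_dec (t (S i)) ts) as [E|E]; [rewrite E; auto|].
    exfalso; apply (uniq (t (S i))); auto. }
  assert (axis_psi : forall i, (i < q)%nat -> MM Ob u p i i -> psi Ob u g (t i) = 0).
  { intros i Hi E. assert (X := psi_M Om g dg Ob u q p t i i HP Hi Hi E). lra. }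
  intros j Hj. fold (pm q j). fold (sc q j).
  assert (Hpm := pm_lt q j ltac:(lia) Hj). assert (Hsc := sc_lt q j ltac:(lia) Hj).
  exists (t (pm q j)), (t j), (t (sc q j)).
  split; [auto|split; [auto|split; [auto|split]]].
  - destruct (Nat.eq_dec j 0) as [->|nj].
    + assert (M := mirror_all Om g dg Ob u q p t ts c HP HT (sc q 0) Hsc).
      replace ((q - sc q 0) mod q)%nat with (pm q 0) in M.
      2:{ rewrite sc_val, pm_val by lia. destruct (Nat.eq_dec 1 q); [lia|]. simpl.
          rewrite Nat.mod_small; lia. }
      unfold MM in M. rewrite <- M. apply axis_cross; auto.
    + destruct (Req_dec (t j) ts) as [E|E].
      * assert (F := axis_fixed Om g dg Ob u q p t ts c j HP HT Hj E).
        assert (M0 := mirror_all Om g dg Ob u q p t ts c HP HT j Hj).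
        assert (Q : ((q - j) mod q)%nat = j).
        { apply (p_inj Om g dg Ob u q p t HP); auto.
          - apply Nat.mod_upper_bound; lia.
          - unfold MM in F, M0. rewrite <- M0, F. auto. }
        rewrite Nat.mod_small in Q by lia.
        assert (M := mirror_all Om g dg Ob u q p t ts c HP HT (sc q j) Hsc).
        rewrite idx2 in M by lia. rewrite Q in M.
        unfold MM in M. rewrite <- M. apply axis_cross; auto. idtac.
      * apply (offaxis Om g dg Ob u q p t ts c j HP HT Hmax); auto; lia.
  - intros E. apply (p_inj Om g dg Ob u q p t HP) in E; auto.
    assert (Q2 := sc_pm_eq q j q_ge2 Hj E). subst q.
    assert (M1 := mirror_all Om g dg Ob u 2 p t ts c HP HT 1 ltac:(lia)). simpl in M1.
    assert (d0 := axis_dot 0%nat ltac:(lia) ltac:(apply axis_psi; auto; unfold MM; rewrite H0, refl_Ob; auto)).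
    assert (d1 := axis_dot 1%nat ltac:(lia) ltac:(apply axis_psi; auto)).
    apply (perp_cross u); auto.
    + rewrite pm_val by lia. destruct (Nat.eq_dec j 0); destruct j as [|[|]]; simpl; auto; lia.
    + destruct j as [|[|]]; auto; lia.
Qed.
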